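(* Let $\rho>1$ and $a,b>0$. Let $(\lambda_k)_{k\in\mathbb{N}}$ be a strictly increasing sequence of positive real numbers such that $$\liminf_{k\to\infty}\frac{\lambda_k}{k^{1/\rho}}<\Big(\frac{2}{b\rho e}\Big)^{1/\rho},$$ and let $\Lambda=\{\pm\lambda_k:k\in\mathbb{N}\}\subset\mathbb{R}$. Then $\Lambda$ is a uniqueness set for $\mathfrak{G}_{a,b,\rho}$: if $f\in\mathfrak{G}_{a,b,\rho}$ and $f(\lambda)=0$ for all $\lambda\in\Lambda$, then $f\equiv 0$ on $\mathbb{C}$.
   Context: For $\rho>1$ and $a,b>0$, $\mathfrak{G}_{a,b,\rho}$ is the set of entire functions $f$ for which there is a constant $C>0$ with $|f(x+iy)|\le Ce^{-a|x|^\rho+b|y|^\rho}$ for all $x,y\in\mathbb{R}$. A set $\Lambda\subset\mathbb{C}$ is a uniqueness set for a linear space $U$ of entire functions if every $f\in U$ vanishing on $\Lambda$ is identically zero. *)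

(* Defs.v *)
From Stdlib Require Import Reals.
From Coquelicot Require Import Coquelicot.
Open Scope R_scope.

(* |x|^r with the convention 0^r = 0 (Stdlib's Rpower 0 r = 1). *)
Definition abspow (x r : R) : R :=
  match Rle_lt_dec (Rabs x) 0 with
  | left _ => 0
  | right _ => Rpower (Rabs x) r
  end.

Definition entire (f : C -> C) : Prop :=
  forall z : C, @ex_derive C_AbsRing C_NormedModule f z.

Definition Gspace (a b rho : R) (f : C -> C) : Prop :=
  entire f /\
  exists K : R, 0 < K /\
    forall x y : R,
      Cmod (f (RtoC x + Ci * RtoC y)%C) <= K * exp (- a * abspow x rho + b * abspow y rho).

Definition uniqueness_set (U : (C -> C) -> Prop) (Lam : C -> Prop) : Prop :=
  forall f, U f -> (forall z, Lam z -> f z = 0%C) -> forall z, f z = 0%C.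

(* Main.v *)
Require Import Defs.
From Stdlib Require Import Reals Lra Psatz Classical List ZArith.
From Coquelicot Require Import Coquelicot.
Open Scope R_scope.

Definition dif (f : C -> C) (z l : C) : Prop :=
  forall eps, 0 < eps -> exists d, 0 < d /\ forall w, Cmod (w - z) < d ->
    Cmod (f w - f z - l * (w - z))%C <= eps * Cmod (w - z).

Definition rdif (g : R -> C) (t : R) (l : C) : Prop :=
  forall eps, 0 < eps -> exists d, 0 < d /\ forall u, Rabs (u - t) < d ->
    Cmod (g u - g t - RtoC (u - t) * l)%C <= eps * Rabs (u - t).

Definition rcont (g : R -> C) (t : R) : Prop :=
  forall eps, 0 < eps -> exists d, 0 < d /\ forall u, Rabs (u - t) < d ->
    Cmod (g u - g t)%C < eps.

Definition ccont (f : C -> C) (z : C) : Prop :=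
  forall eps, 0 < eps -> exists d, 0 < d /\ forall w, Cmod (w - z) < d ->
    Cmod (f w - f z)%C < eps.

Lemma Cmod_le_sum (z : C) : Cmod z <= Rabs (fst z) + Rabs (snd z).
Proof.
  unfold Cmod. apply Rsqr_incr_0_var.
  - rewrite Rsqr_sqrt by nra. unfold Rsqr.
    pose proof (Rabs_pos (fst z)); pose proof (Rabs_pos (snd z)).
    rewrite <- (pow2_abs (fst z)), <- (pow2_abs (snd z)). nra.
  - pose proof (Rabs_pos (fst z)); pose proof (Rabs_pos (snd z)). lra.
Qed.

Lemma Cmod_fst (z : C) : Rabs (fst z) <= Cmod z.
Proof. apply re_le_Cmod. Qed.
Lemma Cmod_snd (z : C) : Rabs (snd z) <= Cmod z.
Proof. pose proof (Rmax_Cmod z). pose proof (Rmax_r (Rabs (fst z)) (Rabs (snd z))). lra. Qed.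

Lemma prod_norm_Cmod (z : C) : @norm R_AbsRing C_R_NormedModule z = Cmod z.
Proof.
  change (sqrt (Rabs (fst z) ^ 2 + Rabs (snd z) ^ 2) = Cmod z).
  unfold Cmod. rewrite !pow2_abs. reflexivity.
Qed.

Lemma ball_C (z w : C) (e : R) : Cmod (w - z) < e -> ball z e w.
Proof. intro H. apply C_NormedModule_mixin_compat1. exact H. Qed.

Lemma is_derive_dif (f : C -> C) z l :
  @is_derive C_AbsRing C_NormedModule f z l -> dif f z l.
Proof.
  intros [_ H] eps Heps.
  assert (Hz : is_filter_lim (locally z) z) by (intros P HP; exact HP).
  specialize (H z Hz (mkposreal eps Heps)).
  destruct H as [d Hd].
  exists (d / 2). split. { destruct d; simpl; lra. }
  intros w Hw. rewrite Cmult_comm. apply (Hd w). change (Cmod (w - z) < d). destruct d; simpl in *; lra.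
Qed.

Lemma entire_dif (f : C -> C) : entire f -> forall z, exists l, dif f z l.
Proof.
  intros H z. destruct (H z) as [l Hl]. exists l. now apply is_derive_dif.
Qed.

Lemma rdif_is_derive (g : R -> C) t l :
  rdif g t l -> @is_derive R_AbsRing C_R_NormedModule g t l.
Proof.
  intros H. split.
  - apply is_linear_scal_l.
  - intros x Hx. apply (@is_filter_lim_locally_unique R_AbsRing R_NormedModule) in Hx. subst x.
    intros eps. destruct (H eps (cond_pos eps)) as [d [Hd Hd']].
    exists (mkposreal d Hd). intros u Hu. simpl in Hu. unfold AbsRing_ball, abs, minus, plus, opp in Hu; simpl in Hu.
    rewrite !prod_norm_Cmod.
    specialize (Hd' u Hu).
    change (norm (minus u t)) with (Rabs (u - t)).
    match goal with |- Cmod ?X <= _ => assert (E : X = (g u - g t - RtoC (u - t) * l)%C) end.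
    { destruct (g u), (g t), l. unfold minus, plus, opp, scal; simpl.
      unfold prod_plus, prod_opp, prod_scal; simpl. unfold mult, plus, opp; simpl.
      unfold Cminus, Cplus, Copp, Cmult, RtoC; simpl. unfold scal; simpl. unfold mult; simpl. f_equal; ring. }
    rewrite E. exact Hd'.
Qed.

Lemma rcont_continuous (g : R -> C) t :
  rcont g t -> @continuous R_UniformSpace C_UniformSpace g t.
Proof.
  intros H. apply filterlim_locally. intros eps.
  destruct (H eps (cond_pos eps)) as [d [Hd Hd']].
  exists (mkposreal d Hd). intros u Hu. apply ball_C. apply Hd'. exact Hu.
Qed.

Definition CInt (g : R -> C) (a b : R) : C := @RInt C_R_CompleteNormedModule g a b.
Definition CexI (g : R -> C) (a b : R) : Prop := @ex_RInt C_R_NormedModule g a b.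
Definition CisI (g : R -> C) (a b : R) (I : C) : Prop := @is_RInt C_R_NormedModule g a b I.

Lemma CexI_cont g a b : (forall t, Rmin a b <= t <= Rmax a b -> rcont g t) -> CexI g a b.
Proof.
  intros H. unfold CexI.
  apply (@ex_RInt_continuous C_R_CompleteNormedModule).
  intros t Ht. apply rcont_continuous. now apply H.
Qed.

Lemma CInt_correct g a b : CexI g a b -> CisI g a b (CInt g a b).
Proof. intros H. apply (@RInt_correct C_R_CompleteNormedModule). exact H. Qed.

Lemma CInt_unique g a b I : CisI g a b I -> CInt g a b = I.
Proof. intros H. apply (@is_RInt_unique C_R_CompleteNormedModule). exact H. Qed.

Lemma CisI_ex g a b I : CisI g a b I -> CexI g a b.
Proof. intros H. exists I. exact H. Qed.

Lemma CisI_plus g h a b I J : CisI g a b I -> CisI h a b J ->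
  CisI (fun t => g t + h t)%C a b (I + J)%C.
Proof. intros H1 H2. apply (@is_RInt_plus C_R_NormedModule g h a b I J H1 H2). Qed.

Lemma CisI_opp g a b I : CisI g a b I -> CisI (fun t => - g t)%C a b (- I)%C.
Proof. intros H1. apply (@is_RInt_opp C_R_NormedModule g a b I H1). Qed.

Lemma CisI_minus g h a b I J : CisI g a b I -> CisI h a b J ->
  CisI (fun t => g t - h t)%C a b (I - J)%C.
Proof. intros H1 H2. apply (@is_RInt_minus C_R_NormedModule g h a b I J H1 H2). Qed.

Lemma CisI_ext g h a b I : (forall t, Rmin a b < t < Rmax a b -> g t = h t) ->
  CisI g a b I -> CisI h a b I.
Proof. intros E H. apply (@is_RInt_ext C_R_NormedModule g h a b I E H). Qed.

Lemma CisI_scal g a b I (c : C) : CisI g a b I -> CisI (fun t => c * g t)%C a b (c * I)%C.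
Proof.
  intros H.
  assert (H1 := @is_RInt_fct_extend_fst R_NormedModule R_NormedModule g a b I H).
  assert (H2 := @is_RInt_fct_extend_snd R_NormedModule R_NormedModule g a b I H).
  destruct c as [c1 c2].
  apply (@is_RInt_fct_extend_pair R_NormedModule R_NormedModule (fun t => ((c1,c2) * g t)%C) a b).
  - simpl.
    apply (@is_RInt_ext R_NormedModule (fun t => minus (scal c1 (fst (g t))) (scal c2 (snd (g t))))).
    { intros t _. unfold minus, plus, opp, scal; simpl. unfold mult; simpl. ring. }
    replace (c1 * fst I - c2 * snd I) with (@minus R_NormedModule (scal c1 (fst I)) (scal c2 (snd I))).
    2:{ unfold minus, plus, opp, scal; simpl. unfold mult; simpl. ring. }
    apply (@is_RInt_minus R_NormedModule); apply (@is_RInt_scal R_NormedModule); assumption.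
  - simpl.
    apply (@is_RInt_ext R_NormedModule (fun t => plus (scal c1 (snd (g t))) (scal c2 (fst (g t))))).
    { intros t _. unfold minus, plus, opp, scal; simpl. unfold mult; simpl. ring. }
    replace (c1 * snd I + c2 * fst I) with (@plus R_NormedModule (scal c1 (snd I)) (scal c2 (fst I))).
    2:{ unfold minus, plus, opp, scal; simpl. unfold mult; simpl. ring. }
    apply (@is_RInt_plus R_NormedModule); apply (@is_RInt_scal R_NormedModule); assumption.
Qed.

Lemma CisI_const a b (c : C) : CisI (fun _ => c) a b (RtoC (b - a) * c)%C.
Proof.
  unfold CisI. 
  replace (RtoC (b - a) * c)%C with (@scal R_AbsRing C_R_NormedModule (b - a) c).
  - apply (@is_RInt_const C_R_NormedModule).
  - destruct c. unfold scal; simpl. unfold prod_scal; simpl. unfold scal; simpl; unfold mult; simpl.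
    unfold Cmult, RtoC; simpl. f_equal; ring.
Qed.

Lemma CisI_Chasles g a b c I J : CisI g a b I -> CisI g b c J -> CisI g a c (I + J)%C.
Proof. intros H1 H2. apply (@is_RInt_Chasles C_R_NormedModule g a b c I J H1 H2). Qed.

Lemma CisI_point g a : CisI g a a 0%C.
Proof. apply (@is_RInt_point C_R_NormedModule). Qed.

Lemma CisI_swap g a b I : CisI g a b I -> CisI g b a (- I)%C.
Proof. intros H. apply (@is_RInt_swap C_R_NormedModule). exact H. Qed.

Lemma CisI_bound g a b I M : a <= b -> (forall t, a <= t <= b -> Cmod (g t) <= M) ->
  CisI g a b I -> Cmod I <= (b - a) * M.
Proof.
  intros Hab Hb H.
  rewrite <- prod_norm_Cmod.
  apply (@norm_RInt_le C_R_NormedModule g (fun _ => M) a b I).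
  - exact Hab.
  - intros t Ht. rewrite prod_norm_Cmod. now apply Hb.
  - exact H.
  - replace ((b - a) * M) with (scal (b - a) M) by (unfold scal; simpl; unfold mult; simpl; ring).
    apply (@is_RInt_const R_NormedModule).
Qed.

Lemma CisI_FTC (P g : R -> C) a b :
  (forall t, Rmin a b <= t <= Rmax a b -> rdif P t (g t)) ->
  (forall t, Rmin a b <= t <= Rmax a b -> rcont g t) ->
  CisI g a b (P b - P a)%C.
Proof.
  intros H1 H2. unfold CisI.
  assert (E : (P b - P a)%C = @minus C_R_CompleteNormedModule (P b) (P a)) by reflexivity.
  rewrite E.
  apply (@is_RInt_derive C_R_CompleteNormedModule P g a b).
  - intros t Ht. apply rdif_is_derive. now apply H1.
  - intros t Ht. apply rcont_continuous. now apply H2.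
Qed.

Lemma Cmod_sub_sym (a b : C) : Cmod (a - b) = Cmod (b - a).
Proof. replace (a - b)%C with (- (b - a))%C by ring. apply Cmod_opp. Qed.

Lemma Cmod_tri3 (a b c : C) : Cmod (a + b + c) <= Cmod a + Cmod b + Cmod c.
Proof. pose proof (Cmod_triangle (a + b) c); pose proof (Cmod_triangle a b); lra. Qed.

Lemma ccont_const (c : C) z : ccont (fun _ => c) z.
Proof. intros e He. exists 1. split; [lra|]. intros w _. replace (c - c)%C with (RtoC 0) by ring.
  rewrite Cmod_0. lra. Qed.

Lemma ccont_id z : ccont (fun w => w) z.
Proof. intros e He. exists e. split; [lra|]. intros w H; exact H. Qed.

Lemma ccont_plus f g z : ccont f z -> ccont g z -> ccont (fun w => f w + g w)%C z.
Proof.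
  intros Hf Hg e He. destruct (Hf (e/2)) as [d1 [Hd1 H1]]; [lra|].
  destruct (Hg (e/2)) as [d2 [Hd2 H2]]; [lra|].
  exists (Rmin d1 d2). split; [apply Rmin_pos; lra|]. intros w Hw.
  assert (A1 := H1 w ltac:(pose proof (Rmin_l d1 d2); lra)).
  assert (A2 := H2 w ltac:(pose proof (Rmin_r d1 d2); lra)).
  replace (f w + g w - (f z + g z))%C with ((f w - f z) + (g w - g z))%C by ring.
  pose proof (Cmod_triangle (f w - f z) (g w - g z)). lra.
Qed.

Lemma ccont_opp f z : ccont f z -> ccont (fun w => - f w)%C z.
Proof.
  intros Hf e He. destruct (Hf e He) as [d [Hd H]]. exists d. split; auto.
  intros w Hw. replace (- f w - - f z)%C with (- (f w - f z))%C by ring. rewrite Cmod_opp. auto.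
Qed.

Lemma ccont_mult f g z : ccont f z -> ccont g z -> ccont (fun w => f w * g w)%C z.
Proof.
  intros Hf Hg e He.
  set (A := Cmod (f z) + 1). set (B := Cmod (g z) + 1).
  assert (HA : 0 < A) by (unfold A; pose proof (Cmod_ge_0 (f z)); lra).
  assert (HB : 0 < B) by (unfold B; pose proof (Cmod_ge_0 (g z)); lra).
  set (e1 := Rmin 1 (e / (2 * B))). set (e2 := e / (2 * (A + 1))).
  assert (He1 : 0 < e1) by (unfold e1; apply Rmin_pos; [lra| apply Rdiv_lt_0_compat; lra]).
  assert (He2 : 0 < e2) by (unfold e2; apply Rdiv_lt_0_compat; lra).
  destruct (Hf e1 He1) as [d1 [Hd1 H1]]. destruct (Hg e2 He2) as [d2 [Hd2 H2]].
  exists (Rmin d1 d2). split; [apply Rmin_pos; lra|]. intros w Hw.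
  assert (A1 := H1 w ltac:(pose proof (Rmin_l d1 d2); lra)).
  assert (A2 := H2 w ltac:(pose proof (Rmin_r d1 d2); lra)).
  replace (f w * g w - f z * g z)%C with ((f w - f z) * g z + f w * (g w - g z))%C by ring.
  eapply Rle_lt_trans. apply Cmod_triangle. rewrite !Cmod_mult.
  assert (E1 : e1 <= 1) by apply Rmin_l.
  assert (E2 : e1 <= e / (2 * B)) by apply Rmin_r.
  assert (Hfw : Cmod (f w) <= A + 1).
  { replace (f w) with (f z + (f w - f z))%C by ring. pose proof (Cmod_triangle (f z) (f w - f z)).
    unfold A; lra. }
  assert (X1 : Cmod (f w - f z) * Cmod (g z) <= e / 2).
  { 
    apply Rle_trans with (e1 * B).
    - apply Rmult_le_compat; try apply Cmod_ge_0; unfold B; lra.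
    - apply Rle_trans with (e / (2 * B) * B). apply Rmult_le_compat_r; lra.
      right. field. lra. }
  assert (X2 : Cmod (f w) * Cmod (g w - g z) < e / 2).
  { apply Rle_lt_trans with ((A + 1) * Cmod (g w - g z)).
    - apply Rmult_le_compat_r; [apply Cmod_ge_0| exact Hfw].
    - apply Rlt_le_trans with ((A + 1) * e2). apply Rmult_lt_compat_l; lra.
      unfold e2. right. field. lra. }
  lra.
Qed.

Lemma ccont_inv f z : ccont f z -> f z <> 0%C -> ccont (fun w => / f w)%C z.
Proof.
  intros Hf Hz e He.
  set (m := Cmod (f z)). assert (Hm : 0 < m) by (apply Cmod_gt_0; exact Hz).
  set (e1 := Rmin (m / 2) (e * m * m / 2)).
  assert (He1 : 0 < e1) by (unfold e1; apply Rmin_pos; [lra| ]; apply Rmult_lt_0_compat; [|lra];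
    apply Rmult_lt_0_compat; [|lra]; apply Rmult_lt_0_compat; lra).
  destruct (Hf e1 He1) as [d [Hd H]]. exists d. split; auto. intros w Hw.
  specialize (H w Hw).
  assert (Hfw : m / 2 <= Cmod (f w)).
  { assert (E1 : e1 <= m / 2) by apply Rmin_l.
    pose proof (Cmod_triangle (f w) (f z - f w)).
    replace (f w + (f z - f w))%C with (f z) in H0 by ring.
    rewrite Cmod_sub_sym in H0. unfold m in *. lra. }
  assert (Hw0 : f w <> 0%C). { intro E. rewrite E, Cmod_0 in Hfw. lra. }
  replace (/ f w - / f z)%C with (- (f w - f z) / (f w * f z))%C by (field; split; auto).
  rewrite Cmod_div by (apply Cmult_neq_0; auto). rewrite Cmod_opp, Cmod_mult.
  fold m. apply Rlt_le_trans with (e1 / (m / 2 * m)).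
  - unfold Rdiv. apply Rle_lt_trans with (Cmod (f w - f z) * / (m / 2 * m)).
    + apply Rmult_le_compat_l. apply Cmod_ge_0. apply Rinv_le_contravar.
      apply Rmult_lt_0_compat; lra. apply Rmult_le_compat_r; lra.
    + apply Rmult_lt_compat_r. apply Rinv_0_lt_compat. apply Rmult_lt_0_compat; lra. exact H.
  - assert (H0 : e1 <= e * m * m / 2) by apply Rmin_r.
    apply Rle_trans with ((e * m * m / 2) / (m / 2 * m)).
    + unfold Rdiv. apply Rmult_le_compat_r. apply Rlt_le, Rinv_0_lt_compat, Rmult_lt_0_compat; lra. exact H0.
    + right. field. lra.
Qed.

Lemma rcont_comp (q : C -> C) (g : R -> C) t : ccont q (g t) -> rcont g t -> rcont (fun u => q (g u)) t.
Proof.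
  intros Hq Hg e He. destruct (Hq e He) as [d1 [Hd1 H1]]. destruct (Hg d1 Hd1) as [d2 [Hd2 H2]].
  exists d2. split; [exact Hd2|]. intros u Hu. apply H1. apply H2. exact Hu.
Qed.

Lemma ccont_comp (q : C -> C) (g : C -> C) z : ccont q (g z) -> ccont g z -> ccont (fun u => q (g u)) z.
Proof.
  intros Hq Hg e He. destruct (Hq e He) as [d1 [Hd1 H1]]. destruct (Hg d1 Hd1) as [d2 [Hd2 H2]].
  exists d2. split; [exact Hd2|]. intros u Hu. apply H1. apply H2. exact Hu.
Qed.

Lemma Cmod_R (x : R) : Cmod (RtoC x) = Rabs x.
Proof. unfold Cmod, RtoC. simpl. replace (x * (x * 1) + 0 * (0 * 1)) with (x * x) by ring.
  apply sqrt_Rsqr_abs. Qed.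

Lemma Cmod_Rdiff (u t : R) : Cmod ((u, 0) - (t, 0))%C = Rabs (u - t).
Proof. replace ((u, 0) - (t, 0))%C with (RtoC (u - t)). apply Cmod_R.
  unfold RtoC, Cminus, Cplus, Copp; simpl. f_equal; ring. Qed.

Lemma ccont_of_rcont f t : rcont f t -> ccont (fun z => f (fst z)) (t, 0).
Proof.
  intros Hf e He. destruct (Hf e He) as [d [Hd H]]. exists d; split; auto. intros w Hw.
  apply H. pose proof (Cmod_fst (w - (t,0))). simpl in H0. simpl. unfold Rminus. lra.
Qed.

Lemma rcont_of_ccont f t : ccont (fun z => f (fst z)) (t, 0) -> rcont f t.
Proof.
  intros Hf e He. destruct (Hf e He) as [d [Hd H]]. exists d; split; auto. intros u Hu.
  apply (H (u, 0)). rewrite Cmod_Rdiff. exact Hu.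
Qed.

Lemma rcont_mult f g t : rcont f t -> rcont g t -> rcont (fun u => f u * g u)%C t.
Proof.
  intros Hf Hg. apply rcont_of_ccont.
  apply (ccont_mult (fun z => f (fst z)) (fun z => g (fst z))); now apply ccont_of_rcont.
Qed.

Lemma rcont_plus f g t : rcont f t -> rcont g t -> rcont (fun u => f u + g u)%C t.
Proof.
  intros Hf Hg. apply rcont_of_ccont.
  apply (ccont_plus (fun z => f (fst z)) (fun z => g (fst z))); now apply ccont_of_rcont.
Qed.

Lemma rcont_const (c : C) t : rcont (fun _ => c) t.
Proof. apply rcont_of_ccont. apply ccont_const. Qed.

Definition cdif (f : C -> C) (z l : C) : Prop :=
  exists phi d, 0 < d /\ ccont phi z /\ phi z = l /\
    forall w, Cmod (w - z) < d -> (f w - f z = phi w * (w - z))%C.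

Definition rcdif (g : R -> C) (t : R) (l : C) : Prop :=
  exists psi d, 0 < d /\ rcont psi t /\ psi t = l /\
    forall u, Rabs (u - t) < d -> (g u - g t = psi u * RtoC (u - t))%C.

Lemma Cminus_eq0 (a b : C) : a <> b -> (a - b)%C <> 0%C.
Proof. intros H E. apply H. apply Ceq_minus. exact E. Qed.

Lemma dif_cdif f z l : dif f z l -> cdif f z l.
Proof.
  intros H.
  exists (fun w => match Ceq_dec w z with left _ => l | right _ => ((f w - f z) / (w - z))%C end).
  exists 1. split; [lra|]. split; [|split].
  - intros e He. destruct (H (e / 2)) as [d [Hd Hd']]; [lra|]. exists d. split; auto.
    intros w Hw. destruct (Ceq_dec w z) as [E|E]; destruct (Ceq_dec z z) as [_|NE]; try congruence.
    + subst. replace (l - l)%C with (RtoC 0) by ring. rewrite Cmod_0. lra.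
    + specialize (Hd' w Hw). assert (Hwz := Cminus_eq0 w z E).
      replace ((f w - f z) / (w - z) - l)%C with ((f w - f z - l * (w - z)) / (w - z))%C by (field; auto).
      rewrite Cmod_div by auto. pose proof (Cmod_gt_0 (w - z)) as [G _]. specialize (G Hwz).
      apply Rle_lt_trans with (e / 2). 2: lra.
      apply Rmult_le_reg_r with (Cmod (w - z)); auto. unfold Rdiv at 1. rewrite Rmult_assoc, Rinv_l by lra. lra.
  - destruct (Ceq_dec z z); congruence.
  - intros w _. destruct (Ceq_dec w z) as [E|E].
    + subst. ring.
    + field. apply Cminus_eq0; auto.
Qed.

Lemma cdif_approx f z l : cdif f z l -> dif f z l.
Proof.
  intros [phi [d [Hd [Hc [Hl Hf]]]]] e He.
  destruct (Hc e He) as [d2 [Hd2 H2]]. exists (Rmin d d2). split; [apply Rmin_pos; lra|].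
  intros w Hw. rewrite Hf by (pose proof (Rmin_l d d2); lra).
  replace (phi w * (w - z) - l * (w - z))%C with ((phi w - phi z) * (w - z))%C by (rewrite Hl; ring).
  rewrite Cmod_mult. apply Rmult_le_compat_r. apply Cmod_ge_0. left. apply H2.
  pose proof (Rmin_r d d2); lra.
Qed.

Lemma cdif_ccont f z l : cdif f z l -> ccont f z.
Proof.
  intros [phi [d [Hd [Hc [Hl Hf]]]]] e He.
  destruct (Hc 1) as [d2 [Hd2 H2]]; [lra|].
  set (B := Cmod (phi z) + 1).
  assert (HB : 0 < B) by (unfold B; pose proof (Cmod_ge_0 (phi z)); lra).
  exists (Rmin (Rmin d d2) (e / B)). split. { apply Rmin_pos; [apply Rmin_pos|apply Rdiv_lt_0_compat]; lra. }
  intros w Hw. pose proof (Rmin_l (Rmin d d2) (e / B)). pose proof (Rmin_r (Rmin d d2) (e / B)).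
  pose proof (Rmin_l d d2). pose proof (Rmin_r d d2).
  rewrite Hf by lra. rewrite Cmod_mult.
  assert (Hp : Cmod (phi w) <= B).
  { replace (phi w) with (phi z + (phi w - phi z))%C by ring.
    pose proof (Cmod_triangle (phi z) (phi w - phi z)). specialize (H2 w ltac:(lra)). unfold B; lra. }
  apply Rle_lt_trans with (B * Cmod (w - z)).
  - apply Rmult_le_compat_r; auto. apply Cmod_ge_0.
  - apply Rlt_le_trans with (B * (e / B)). apply Rmult_lt_compat_l; lra.
    right; field; lra.
Qed.

Lemma cdif_const (c : C) z : cdif (fun _ => c) z 0%C.
Proof.
  exists (fun _ => 0%C), 1. repeat split; try lra. apply ccont_const. intros; ring.
Qed.

Lemma cdif_id z : cdif (fun w => w) z 1%C.
Proof.
  exists (fun _ => 1%C), 1. repeat split; try lra. apply ccont_const. intros; ring.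
Qed.

Lemma cdif_plus f g z l1 l2 : cdif f z l1 -> cdif g z l2 -> cdif (fun w => f w + g w)%C z (l1 + l2)%C.
Proof.
  intros [p1 [d1 [Hd1 [Hc1 [Hl1 H1]]]]] [p2 [d2 [Hd2 [Hc2 [Hl2 H2]]]]].
  exists (fun w => p1 w + p2 w)%C, (Rmin d1 d2). split; [apply Rmin_pos; lra|].
  split; [apply ccont_plus; auto|]. split; [rewrite Hl1, Hl2; auto|].
  intros w Hw. pose proof (Rmin_l d1 d2). pose proof (Rmin_r d1 d2).
  replace (f w + g w - (f z + g z))%C with ((f w - f z) + (g w - g z))%C by ring.
  rewrite H1, H2 by lra. ring.
Qed.

Lemma cdif_mult f g z l1 l2 : cdif f z l1 -> cdif g z l2 ->
  cdif (fun w => f w * g w)%C z (l1 * g z + f z * l2)%C.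
Proof.
  intros Hf Hg. assert (Cg := cdif_ccont _ _ _ Hg).
  destruct Hf as [p1 [d1 [Hd1 [Hc1 [Hl1 H1]]]]]. destruct Hg as [p2 [d2 [Hd2 [Hc2 [Hl2 H2]]]]].
  exists (fun w => p1 w * g w + f z * p2 w)%C, (Rmin d1 d2). split; [apply Rmin_pos; lra|].
  split. { apply ccont_plus. apply ccont_mult; auto. apply ccont_mult; auto. apply ccont_const. }
  split; [rewrite Hl1, Hl2; auto|].
  intros w Hw. pose proof (Rmin_l d1 d2). pose proof (Rmin_r d1 d2).
  replace (f w * g w - f z * g z)%C with ((f w - f z) * g w + f z * (g w - g z))%C by ring.
  rewrite H1, H2 by lra. ring.
Qed.

Lemma cdif_inv f z l : cdif f z l -> f z <> 0%C -> cdif (fun w => / f w)%C z (- l / (f z * f z))%C.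
Proof.
  intros Hf Hz. assert (Cf := cdif_ccont _ _ _ Hf).
  destruct Hf as [p1 [d1 [Hd1 [Hc1 [Hl1 H1]]]]].
  set (m := Cmod (f z)). assert (Hm : 0 < m) by (apply Cmod_gt_0; exact Hz).
  destruct (Cf m Hm) as [d2 [Hd2 H2]].
  assert (NZ : forall w, Cmod (w - z) < d2 -> f w <> 0%C).
  { intros w Hw E. specialize (H2 w Hw). rewrite E in H2.
    replace (0 - f z)%C with (- f z)%C in H2 by ring. rewrite Cmod_opp in H2. unfold m in H2. lra. }
  exists (fun w => - p1 w / (f w * f z))%C, (Rmin d1 d2). split; [apply Rmin_pos; lra|].
  split.
  { unfold Cdiv. apply ccont_mult. apply ccont_opp; auto. apply ccont_inv.
    apply ccont_mult; auto. apply ccont_const. apply Cmult_neq_0; auto. }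
  split; [rewrite Hl1; auto|].
  intros w Hw. pose proof (Rmin_l d1 d2). pose proof (Rmin_r d1 d2).
  assert (Hw0 : f w <> 0%C) by (apply NZ; lra).
  replace (/ f w - / f z)%C with (- (f w - f z) / (f w * f z))%C by (field; auto).
  rewrite H1 by lra. field. auto.
Qed.

Lemma cdif_ext f g z l d : 0 < d -> (forall w, Cmod (w - z) < d -> f w = g w) -> cdif f z l -> cdif g z l.
Proof.
  intros Hd E [p1 [d1 [Hd1 [Hc1 [Hl1 H1]]]]].
  exists p1, (Rmin d d1). split; [apply Rmin_pos; lra|]. split; auto. split; auto.
  intros w Hw. pose proof (Rmin_l d d1). pose proof (Rmin_r d d1).
  rewrite <- (E w) by lra. rewrite <- (E z).
  apply H1. lra. replace (z - z)%C with (RtoC 0) by ring. rewrite Cmod_0. lra.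
Qed.

Lemma rcdif_rcont g t l : rcdif g t l -> rcont g t.
Proof.
  intros [phi [d [Hd [Hc [Hl Hf]]]]] e He.
  destruct (Hc 1) as [d2 [Hd2 H2]]; [lra|].
  set (B := Cmod (phi t) + 1).
  assert (HB : 0 < B) by (unfold B; pose proof (Cmod_ge_0 (phi t)); lra).
  exists (Rmin (Rmin d d2) (e / B)). split. { apply Rmin_pos; [apply Rmin_pos|apply Rdiv_lt_0_compat]; lra. }
  intros w Hw. pose proof (Rmin_l (Rmin d d2) (e / B)). pose proof (Rmin_r (Rmin d d2) (e / B)).
  pose proof (Rmin_l d d2). pose proof (Rmin_r d d2).
  rewrite Hf by lra. rewrite Cmod_mult, Cmod_R.
  assert (Hp : Cmod (phi w) <= B).
  { replace (phi w) with (phi t + (phi w - phi t))%C by ring.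
    pose proof (Cmod_triangle (phi t) (phi w - phi t)). specialize (H2 w ltac:(lra)). unfold B; lra. }
  apply Rle_lt_trans with (B * Rabs (w - t)).
  - apply Rmult_le_compat_r; auto. apply Rabs_pos.
  - apply Rlt_le_trans with (B * (e / B)). apply Rmult_lt_compat_l; lra.
    right; field; lra.
Qed.

Lemma rcdif_rdif g t l : rcdif g t l -> rdif g t l.
Proof.
  intros [phi [d [Hd [Hc [Hl Hf]]]]] e He.
  destruct (Hc e He) as [d2 [Hd2 H2]]. exists (Rmin d d2). split; [apply Rmin_pos; lra|].
  intros w Hw. rewrite Hf by (pose proof (Rmin_l d d2); lra).
  replace (phi w * RtoC (w - t) - RtoC (w - t) * l)%C with ((phi w - phi t) * RtoC (w - t))%C by (rewrite Hl; ring).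
  rewrite Cmod_mult, Cmod_R. apply Rmult_le_compat_r. apply Rabs_pos. left. apply H2.
  pose proof (Rmin_r d d2); lra.
Qed.

Lemma rdif_rcdif g t l : rdif g t l -> rcdif g t l.
Proof.
  intros H.
  exists (fun u => match Req_EM_T u t with left _ => l | right _ => ((g u - g t) / RtoC (u - t))%C end).
  exists 1. split; [lra|]. split; [|split].
  - intros e He. destruct (H (e / 2)) as [d [Hd Hd']]; [lra|]. exists d. split; auto.
    intros w Hw. destruct (Req_EM_T w t) as [E|E]; destruct (Req_EM_T t t) as [_|NE]; try congruence.
    + subst. replace (l - l)%C with (RtoC 0) by ring. rewrite Cmod_0. lra.
    + specialize (Hd' w Hw). assert (Hwz : RtoC (w - t) <> 0%C).
      { intro X. apply RtoC_inj in X. apply E. lra. }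
      replace ((g w - g t) / RtoC (w - t) - l)%C with ((g w - g t - RtoC (w - t) * l) / RtoC (w - t))%C by (field; auto).
      rewrite Cmod_div by auto. rewrite Cmod_R. assert (0 < Rabs (w - t)) by (apply Rabs_pos_lt; lra).
      apply Rle_lt_trans with (e / 2). 2: lra.
      apply Rmult_le_reg_r with (Rabs (w - t)); auto. unfold Rdiv at 1. rewrite Rmult_assoc, Rinv_l by lra. lra.
  - destruct (Req_EM_T t t); congruence.
  - intros w _. destruct (Req_EM_T w t) as [E|E].
    + subst. replace (t - t) with 0 by ring. ring.
    + field. intro X. apply RtoC_inj in X. apply E. lra.
Qed.

Lemma chain_rc (P : C -> C) (g : R -> C) t l1 l2 :
  cdif P (g t) l1 -> rcdif g t l2 -> rcdif (fun u => P (g u)) t (l1 * l2)%C.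
Proof.
  intros HP Hg. assert (Cg := rcdif_rcont _ _ _ Hg).
  destruct HP as [p1 [d1 [Hd1 [Hc1 [Hl1 H1]]]]]. destruct Hg as [p2 [d2 [Hd2 [Hc2 [Hl2 H2]]]]].
  destruct (Cg d1 Hd1) as [d3 [Hd3 H3]].
  exists (fun u => p1 (g u) * p2 u)%C, (Rmin d2 d3). split; [apply Rmin_pos; lra|].
  split. { apply rcont_mult; auto. apply rcont_comp; auto. }
  split; [rewrite Hl1, Hl2; auto|].
  intros u Hu. pose proof (Rmin_l d2 d3). pose proof (Rmin_r d2 d3).
  rewrite H1 by (apply H3; lra). rewrite H2 by lra. ring.
Qed.

Lemma rcdif_hline (y t : R) : rcdif (fun u => (u, y) : C) t 1%C.
Proof.
  exists (fun _ => 1%C), 1. split; [lra|]. split; [apply rcont_const|]. split; auto.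
  intros u _. unfold RtoC, Cminus, Cplus, Copp, Cmult; simpl. f_equal; ring.
Qed.

Lemma rcdif_vline (x t : R) : rcdif (fun u => (x, u) : C) t Ci.
Proof.
  exists (fun _ => Ci), 1. split; [lra|]. split; [apply rcont_const|]. split; auto.
  intros u _. unfold RtoC, Ci, Cminus, Cplus, Copp, Cmult; simpl. f_equal; ring.
Qed.

Lemma rdif_of_real (f : R -> R) t l : derivable_pt_lim f t l -> rdif (fun u => RtoC (f u)) t (RtoC l).
Proof.
  intros H e He. destruct (H e He) as [d Hd]. exists d. split; [apply cond_pos|].
  intros u Hu. destruct (Req_EM_T u t) as [E|E].
  - subst. replace (RtoC (f t) - RtoC (f t) - RtoC (t - t) * RtoC l)%C with (RtoC 0)
      by (unfold RtoC, Cminus, Cplus, Copp, Cmult; simpl; f_equal; ring).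
    rewrite Cmod_0. replace (t - t) with 0 by ring. rewrite Rabs_R0. lra.
  - specialize (Hd (u - t) ltac:(lra) Hu). replace (t + (u - t)) with u in Hd by ring.
    replace (RtoC (f u) - RtoC (f t) - RtoC (u - t) * RtoC l)%C with (RtoC (f u - f t - (u - t) * l))
      by (unfold RtoC, Cminus, Cplus, Copp, Cmult; simpl; f_equal; ring).
    rewrite Cmod_R.
    replace (f u - f t - (u - t) * l) with (((f u - f t) / (u - t) - l) * (u - t)) by (field; lra).
    rewrite Rabs_mult. apply Rmult_le_compat_r. apply Rabs_pos. lra.
Qed.

Lemma rcdif_scal g t l (c : C) : rcdif g t l -> rcdif (fun u => c * g u)%C t (c * l)%C.
Proof.
  intros [p [d [Hd [Hc [Hl H]]]]]. exists (fun u => c * p u)%C, d. split; auto. split.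
  - apply rcont_mult; auto. apply rcont_const.
  - split. rewrite Hl; auto. intros u Hu. rewrite <- Cmult_assoc, <- H by auto. ring.
Qed.

Lemma rcdif_plus g h t l1 l2 : rcdif g t l1 -> rcdif h t l2 -> rcdif (fun u => g u + h u)%C t (l1 + l2)%C.
Proof.
  intros [p1 [d1 [Hd1 [Hc1 [Hl1 H1]]]]] [p2 [d2 [Hd2 [Hc2 [Hl2 H2]]]]].
  exists (fun u => p1 u + p2 u)%C, (Rmin d1 d2). split; [apply Rmin_pos; lra|].
  split; [apply rcont_plus; auto|]. split; [rewrite Hl1, Hl2; auto|].
  intros w Hw. pose proof (Rmin_l d1 d2). pose proof (Rmin_r d1 d2).
  replace (g w + h w - (g t + h t))%C with ((g w - g t) + (h w - h t))%C by ring.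
  rewrite H1, H2 by lra. ring.
Qed.

Lemma rcdif_const (c : C) t : rcdif (fun _ => c) t 0%C.
Proof. exists (fun _ => 0%C), 1. split; [lra|]. split; [apply rcont_const|]. split; auto. intros; ring. Qed.

Definition circ (p : C) (r t : R) : C := (p + RtoC r * (cos t, sin t))%C.

Lemma rcdif_circ p r t : rcdif (circ p r) t (Ci * RtoC r * (cos t, sin t))%C.
Proof.
  unfold circ.
  replace (Ci * RtoC r * (cos t, sin t))%C with (0 + RtoC r * (RtoC (- sin t) + Ci * RtoC (cos t)))%C
    by (unfold Ci, RtoC, Cplus, Cmult; simpl; f_equal; ring).
  apply rcdif_plus. apply rcdif_const. apply rcdif_scal.
  apply rdif_rcdif.
  assert (E : forall u, (cos u, sin u) = (RtoC (cos u) + Ci * RtoC (sin u))%C)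
    by (intro u; unfold Ci, RtoC, Cplus, Cmult; simpl; f_equal; ring).
  intros e He.
  destruct (rdif_of_real cos t (- sin t) (derivable_pt_lim_cos t) (e/2)) as [d1 [Hd1 H1]]; [lra|].
  destruct (rdif_of_real sin t (cos t) (derivable_pt_lim_sin t) (e/2)) as [d2 [Hd2 H2]]; [lra|].
  exists (Rmin d1 d2). split; [apply Rmin_pos; lra|]. intros u Hu.
  pose proof (Rmin_l d1 d2). pose proof (Rmin_r d1 d2).
  specialize (H1 u ltac:(lra)). specialize (H2 u ltac:(lra)).
  rewrite !E.
  replace (RtoC (cos u) + Ci * RtoC (sin u) - (RtoC (cos t) + Ci * RtoC (sin t)) -
    RtoC (u - t) * (RtoC (- sin t) + Ci * RtoC (cos t)))%C with
    ((RtoC (cos u) - RtoC (cos t) - RtoC (u - t) * RtoC (- sin t)) +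
     Ci * (RtoC (sin u) - RtoC (sin t) - RtoC (u - t) * RtoC (cos t)))%C by ring.
  eapply Rle_trans. apply Cmod_triangle. rewrite Cmod_mult.
  replace (Cmod Ci) with 1. lra.
  unfold Cmod, Ci; simpl. replace (0 * (0 * 1) + 1 * (1 * 1)) with 1 by ring. now rewrite sqrt_1.
Qed.

Definition gcont (q : C -> C) : Prop := forall z, ccont q z.

Definition hI (q : C -> C) (y a b : R) : C := CInt (fun t => q (t, y)) a b.
Definition vI (q : C -> C) (x a b : R) : C := CInt (fun s => q (x, s)) a b.
Definition RI (q : C -> C) (x1 x2 y1 y2 : R) : C :=
  (hI q y1 x1 x2 + Ci * vI q x2 y1 y2 - hI q y2 x1 x2 - Ci * vI q x1 y1 y2)%C.

Lemma hline_rcont q y t : gcont q -> rcont (fun u => q (u, y)) t.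
Proof. intros H. apply rcont_comp. apply H. eapply rcdif_rcont. apply rcdif_hline. Qed.
Lemma vline_rcont q x t : gcont q -> rcont (fun u => q (x, u)) t.
Proof. intros H. apply rcont_comp. apply H. eapply rcdif_rcont. apply rcdif_vline. Qed.

Lemma hI_ex q y a b : gcont q -> CexI (fun t => q (t, y)) a b.
Proof. intros H. apply CexI_cont. intros; now apply hline_rcont. Qed.
Lemma vI_ex q x a b : gcont q -> CexI (fun t => q (x, t)) a b.
Proof. intros H. apply CexI_cont. intros; now apply vline_rcont. Qed.

Lemma CInt_Chasles g a b c : CexI g a b -> CexI g b c -> CInt g a c = (CInt g a b + CInt g b c)%C.
Proof.
  intros H1 H2. apply (CInt_unique g a c). apply (CisI_Chasles g a b c); apply CInt_correct; auto.
Qed.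

Lemma RI_splitx q x1 m x2 y1 y2 : gcont q ->
  RI q x1 x2 y1 y2 = (RI q x1 m y1 y2 + RI q m x2 y1 y2)%C.
Proof.
  intros H. unfold RI, hI.
  rewrite (CInt_Chasles _ x1 m x2) by (apply hI_ex; auto).
  rewrite (CInt_Chasles (fun t => q (t, y2)) x1 m x2) by (apply hI_ex; auto).
  ring.
Qed.

Lemma RI_splity q x1 x2 y1 m y2 : gcont q ->
  RI q x1 x2 y1 y2 = (RI q x1 x2 y1 m + RI q x1 x2 m y2)%C.
Proof.
  intros H. unfold RI, vI.
  rewrite (CInt_Chasles _ y1 m y2) by (apply vI_ex; auto).
  rewrite (CInt_Chasles (fun t => q (x1, t)) y1 m y2) by (apply vI_ex; auto).
  ring.
Qed.

Lemma CInt_minus g h a b : CexI g a b -> CexI h a b ->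
  CInt (fun t => g t - h t)%C a b = (CInt g a b - CInt h a b)%C.
Proof. intros H1 H2. apply CInt_unique. apply CisI_minus; apply CInt_correct; auto. Qed.

Lemma gcont_minus q h : gcont q -> gcont h -> gcont (fun z => q z - h z)%C.
Proof. intros H1 H2 z. unfold Cminus. apply ccont_plus; auto. apply ccont_opp; auto. Qed.

Lemma RI_minus q h x1 x2 y1 y2 : gcont q -> gcont h ->
  RI (fun z => q z - h z)%C x1 x2 y1 y2 = (RI q x1 x2 y1 y2 - RI h x1 x2 y1 y2)%C.
Proof.
  intros H1 H2. unfold RI, hI, vI.
  rewrite (CInt_minus (fun t => q (t, y1)) (fun t => h (t, y1))) by (apply hI_ex; auto).
  rewrite (CInt_minus (fun t => q (t, y2)) (fun t => h (t, y2))) by (apply hI_ex; auto).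
  rewrite (CInt_minus (fun t => q (x1, t)) (fun t => h (x1, t))) by (apply vI_ex; auto).
  rewrite (CInt_minus (fun t => q (x2, t)) (fun t => h (x2, t))) by (apply vI_ex; auto).
  ring.
Qed.

Lemma Cmod_Ci : Cmod Ci = 1.
Proof. unfold Cmod, Ci; simpl. replace (0 * (0 * 1) + 1 * (1 * 1)) with 1 by ring. now rewrite sqrt_1. Qed.

Lemma CInt_bound g a b M : a <= b -> CexI g a b -> (forall t, a <= t <= b -> Cmod (g t) <= M) ->
  Cmod (CInt g a b) <= (b - a) * M.
Proof. intros Hab He Hb. eapply CisI_bound; eauto. apply CInt_correct; auto. Qed.

Lemma RI_bound q x1 x2 y1 y2 M : gcont q -> x1 <= x2 -> y1 <= y2 ->
  (forall z, x1 <= fst z <= x2 -> y1 <= snd z <= y2 -> Cmod (q z) <= M) ->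
  Cmod (RI q x1 x2 y1 y2) <= 2 * ((x2 - x1) + (y2 - y1)) * M.
Proof.
  intros Hq Hx Hy HM. unfold RI.
  assert (A1 : Cmod (hI q y1 x1 x2) <= (x2 - x1) * M).
  { apply CInt_bound; auto. apply hI_ex; auto. intros t Ht. apply HM; simpl; lra. }
  assert (A2 : Cmod (hI q y2 x1 x2) <= (x2 - x1) * M).
  { apply CInt_bound; auto. apply hI_ex; auto. intros t Ht. apply HM; simpl; lra. }
  assert (A3 : Cmod (vI q x1 y1 y2) <= (y2 - y1) * M).
  { apply CInt_bound; auto. apply vI_ex; auto. intros t Ht. apply HM; simpl; lra. }
  assert (A4 : Cmod (vI q x2 y1 y2) <= (y2 - y1) * M).
  { apply CInt_bound; auto. apply vI_ex; auto. intros t Ht. apply HM; simpl; lra. }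
  unfold Cminus.
  eapply Rle_trans. apply Cmod_triangle. rewrite Cmod_opp, Cmod_mult, Cmod_Ci.
  eapply Rle_trans. apply Rplus_le_compat_r. apply Cmod_triangle. rewrite Cmod_opp.
  eapply Rle_trans. apply Rplus_le_compat_r. apply Rplus_le_compat_r. apply Cmod_triangle.
  rewrite Cmod_mult, Cmod_Ci. lra.
Qed.

Lemma hI_FTC P q y a b : gcont q -> (forall z, cdif P z (q z)) -> hI q y a b = (P (b, y) - P (a, y))%C.
Proof.
  intros Hq HP. unfold hI. apply CInt_unique.
  apply (CisI_FTC (fun t => P (t, y))).
  - intros t _. apply rcdif_rdif. replace (q (t, y)) with (q (t, y) * 1)%C by ring.
    apply chain_rc. apply HP. apply rcdif_hline.
  - intros; apply hline_rcont; auto.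
Qed.

Lemma vI_FTC P q x a b : gcont q -> (forall z, cdif P z (q z)) -> (Ci * vI q x a b = P (x, b) - P (x, a))%C.
Proof.
  intros Hq HP. unfold vI. symmetry.
  assert (H : CisI (fun t => q (x, t) * Ci)%C a b (P (x, b) - P (x, a))%C).
  { apply (CisI_FTC (fun t => P (x, t))).
    - intros t _. apply rcdif_rdif. apply chain_rc. apply HP. apply rcdif_vline.
    - intros; apply rcont_mult. apply vline_rcont; auto. apply rcont_const. }
  assert (H2 : CisI (fun t => Ci * q (x, t))%C a b (Ci * CInt (fun s => q (x, s)) a b)%C).
  { apply CisI_scal. apply CInt_correct. apply vI_ex; auto. }
  apply CisI_ext with (h := fun t => (q (x, t) * Ci)%C) in H2.
  2: { intros; ring. }
  apply CInt_unique in H. apply CInt_unique in H2. congruence.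
Qed.

Lemma RI_deriv P q x1 x2 y1 y2 : gcont q -> (forall z, cdif P z (q z)) -> RI q x1 x2 y1 y2 = 0%C.
Proof.
  intros Hq HP. unfold RI.
  rewrite (hI_FTC P q y1), (hI_FTC P q y2), (vI_FTC P q x1), (vI_FTC P q x2) by auto. ring.
Qed.

Record rect := mkR { rx1 : R; rx2 : R; ry1 : R; ry2 : R }.
Definition RIr q r := RI q (rx1 r) (rx2 r) (ry1 r) (ry2 r).
Definition mxr r := (rx1 r + rx2 r) / 2.
Definition myr r := (ry1 r + ry2 r) / 2.
Definition qu1 r := mkR (rx1 r) (mxr r) (ry1 r) (myr r).
Definition qu2 r := mkR (mxr r) (rx2 r) (ry1 r) (myr r).
Definition qu3 r := mkR (rx1 r) (mxr r) (myr r) (ry2 r).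
Definition qu4 r := mkR (mxr r) (rx2 r) (myr r) (ry2 r).

Lemma RIr_split q r : gcont q -> RIr q r = (RIr q (qu1 r) + RIr q (qu2 r) + RIr q (qu3 r) + RIr q (qu4 r))%C.
Proof.
  intros Hq. unfold RIr, qu1, qu2, qu3, qu4; simpl.
  rewrite (RI_splitx q (rx1 r) (mxr r) (rx2 r)) by auto.
  rewrite (RI_splity q (rx1 r) (mxr r) (ry1 r) (myr r) (ry2 r)) by auto.
  rewrite (RI_splity q (mxr r) (rx2 r) (ry1 r) (myr r) (ry2 r)) by auto.
  ring.
Qed.

Definition step q r :=
  if Rle_dec (Cmod (RIr q r) / 4) (Cmod (RIr q (qu1 r))) then qu1 r else
  if Rle_dec (Cmod (RIr q r) / 4) (Cmod (RIr q (qu2 r))) then qu2 r else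
  if Rle_dec (Cmod (RIr q r) / 4) (Cmod (RIr q (qu3 r))) then qu3 r else qu4 r.

Definition geo (r s : rect) : Prop :=
  rx1 r <= rx1 s /\ rx2 s <= rx2 r /\ ry1 r <= ry1 s /\ ry2 s <= ry2 r /\
  rx2 s - rx1 s = (rx2 r - rx1 r) / 2 /\ ry2 s - ry1 s = (ry2 r - ry1 r) / 2.

Lemma step_prop q r : gcont q -> rx1 r <= rx2 r -> ry1 r <= ry2 r ->
  Cmod (RIr q r) / 4 <= Cmod (RIr q (step q r)) /\ geo r (step q r).
Proof.
  intros Hq Hx Hy. unfold step.
  assert (G1 : geo r (qu1 r)) by (unfold geo, qu1, mxr, myr; simpl; lra).
  assert (G2 : geo r (qu2 r)) by (unfold geo, qu2, mxr, myr; simpl; lra).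
  assert (G3 : geo r (qu3 r)) by (unfold geo, qu3, mxr, myr; simpl; lra).
  assert (G4 : geo r (qu4 r)) by (unfold geo, qu4, mxr, myr; simpl; lra).
  destruct (Rle_dec _ _); [split; auto|].
  destruct (Rle_dec _ _); [split; auto|].
  destruct (Rle_dec _ _); [split; auto|].
  split; auto.
  rewrite (RIr_split q r Hq) in n, n0, n1 |- *.
  pose proof (Cmod_triangle (RIr q (qu1 r) + RIr q (qu2 r) + RIr q (qu3 r)) (RIr q (qu4 r))).
  pose proof (Cmod_triangle (RIr q (qu1 r) + RIr q (qu2 r)) (RIr q (qu3 r))).
  pose proof (Cmod_triangle (RIr q (qu1 r)) (RIr q (qu2 r))).
  lra.
Qed.

Fixpoint seqr q r0 (n : nat) : rect :=
  match n with O => r0 | S k => step q (seqr q r0 k) end.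

Section G.
Variable q : C -> C.
Variable r0 : rect.
Hypothesis Hq : gcont q.
Hypothesis Hx0 : rx1 r0 <= rx2 r0.
Hypothesis Hy0 : ry1 r0 <= ry2 r0.

Let W := rx2 r0 - rx1 r0.
Let H := ry2 r0 - ry1 r0.

Lemma seqr_props n :
  rx2 (seqr q r0 n) - rx1 (seqr q r0 n) = W / 2 ^ n /\
  ry2 (seqr q r0 n) - ry1 (seqr q r0 n) = H / 2 ^ n /\
  Cmod (RIr q r0) <= 4 ^ n * Cmod (RIr q (seqr q r0 n)).
Proof.
  induction n as [|n IH].
  - simpl. unfold W, H. repeat split; try field. lra.
  - destruct IH as [A [B Cc]].
    assert (P2 : 0 < 2 ^ n) by (apply pow_lt; lra).
    assert (Hw : rx1 (seqr q r0 n) <= rx2 (seqr q r0 n)).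
    { rewrite <- Rminus_le_0 || idtac. assert (0 <= W / 2 ^ n) by (apply Rdiv_le_0_compat; unfold W; lra). lra. }
    assert (Hh : ry1 (seqr q r0 n) <= ry2 (seqr q r0 n)).
    { assert (0 <= H / 2 ^ n) by (apply Rdiv_le_0_compat; unfold H; lra). lra. }
    destruct (step_prop q (seqr q r0 n) Hq Hw Hh) as [S1 [_ [_ [_ [_ [S2 S3]]]]]].
    simpl. repeat split.
    + rewrite S2, A. field. lra.
    + rewrite S3, B. field. lra.
    + assert (0 < 4 ^ n) by (apply pow_lt; lra).
      apply Rle_trans with (4 ^ n * (4 * (Cmod (RIr q (step q (seqr q r0 n)))))).
      * apply Rle_trans with (4 ^ n * Cmod (RIr q (seqr q r0 n))); auto.
        apply Rmult_le_compat_l; lra.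
      * right. ring.
Qed.

Lemma seqr_mono n : geo (seqr q r0 n) (seqr q r0 (S n)).
Proof.
  destruct (seqr_props n) as [A [B _]].
  assert (P2 : 0 < 2 ^ n) by (apply pow_lt; lra).
  assert (Hw : rx1 (seqr q r0 n) <= rx2 (seqr q r0 n)).
  { assert (0 <= W / 2 ^ n) by (apply Rdiv_le_0_compat; unfold W; lra). lra. }
  assert (Hh : ry1 (seqr q r0 n) <= ry2 (seqr q r0 n)).
  { assert (0 <= H / 2 ^ n) by (apply Rdiv_le_0_compat; unfold H; lra). lra. }
  apply (step_prop q (seqr q r0 n) Hq Hw Hh).
Qed.

Lemma seqr_nest n m : (n <= m)%nat ->
  rx1 (seqr q r0 n) <= rx1 (seqr q r0 m) /\ rx2 (seqr q r0 m) <= rx2 (seqr q r0 n) /\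
  ry1 (seqr q r0 n) <= ry1 (seqr q r0 m) /\ ry2 (seqr q r0 m) <= ry2 (seqr q r0 n).
Proof.
  induction 1.
  - lra.
  - destruct (seqr_mono m) as [A [B [Cc [D _]]]]. lra.
Qed.

Lemma seqr_ordered n : rx1 (seqr q r0 n) <= rx2 (seqr q r0 n) /\ ry1 (seqr q r0 n) <= ry2 (seqr q r0 n).
Proof.
  destruct (seqr_props n) as [A [B _]].
  assert (P2 : 0 < 2 ^ n) by (apply pow_lt; lra).
  assert (0 <= W / 2 ^ n) by (apply Rdiv_le_0_compat; unfold W; lra).
  assert (0 <= H / 2 ^ n) by (apply Rdiv_le_0_compat; unfold H; lra). lra.
Qed.

Lemma seqr_cross n m : rx1 (seqr q r0 n) <= rx2 (seqr q r0 m) /\ ry1 (seqr q r0 n) <= ry2 (seqr q r0 m).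
Proof.
  destruct (seqr_nest n (max n m)) as [A [_ [Cc _]]]. apply Nat.le_max_l.
  destruct (seqr_nest m (max n m)) as [_ [B [_ D]]]. apply Nat.le_max_r.
  destruct (seqr_ordered (max n m)). lra.
Qed.

Lemma limit_point : exists X Y, forall n,
  rx1 (seqr q r0 n) <= X <= rx2 (seqr q r0 n) /\ ry1 (seqr q r0 n) <= Y <= ry2 (seqr q r0 n).
Proof.
  destruct (completeness (fun x => exists n, x = rx1 (seqr q r0 n))) as [X [HX1 HX2]].
  { exists (rx2 (seqr q r0 0)). intros x [n ->]. apply (seqr_cross n 0). }
  { exists (rx1 (seqr q r0 0)). exists 0%nat. auto. }
  destruct (completeness (fun x => exists n, x = ry1 (seqr q r0 n))) as [Y [HY1 HY2]].
  { exists (ry2 (seqr q r0 0)). intros x [n ->]. apply (seqr_cross n 0). }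
  { exists (ry1 (seqr q r0 0)). exists 0%nat. auto. }
  exists X, Y. intros n. split; split.
  - apply HX1. exists n; auto.
  - apply HX2. intros x [m ->]. apply (seqr_cross m n).
  - apply HY1. exists n; auto.
  - apply HY2. intros x [m ->]. apply (seqr_cross m n).
Qed.

End G.

Lemma cdif_eq f z l l' : cdif f z l -> l = l' -> cdif f z l'.
Proof. intros H E; subst; auto. Qed.

Lemma cdif_affine_prim (c l z0 : C) z :
  cdif (fun w => c * w + l / 2 * ((w - z0) * (w - z0)))%C z (c + l * (z - z0))%C.
Proof.
  eapply cdif_eq.
  - apply cdif_plus.
    + apply (cdif_mult (fun _ => c) (fun w => w)). apply cdif_const. apply cdif_id.
    + apply (cdif_mult (fun _ => l / 2)%C (fun w => (w - z0) * (w - z0))%C). apply cdif_const.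
      apply (cdif_mult (fun w => w - z0)%C (fun w => w - z0)%C);
        (apply (cdif_plus (fun w => w) (fun _ => - z0)%C); [apply cdif_id | apply cdif_const]).
  - simpl. field.
Qed.

Lemma gcont_affine (c l z0 : C) : gcont (fun w => c + l * (w - z0))%C.
Proof.
  intro z. apply ccont_plus. apply ccont_const. apply ccont_mult. apply ccont_const.
  apply (ccont_plus (fun w => w) (fun _ => - z0)%C). apply ccont_id. apply ccont_const.
Qed.

Lemma pow4 n : 4 ^ n = 2 ^ n * 2 ^ n.
Proof. rewrite <- Rpow_mult_distr. replace (2 * 2) with 4 by ring. reflexivity. Qed.

Theorem goursat q x1 x2 y1 y2 : gcont q -> x1 <= x2 -> y1 <= y2 ->
  (forall z, x1 <= fst z <= x2 -> y1 <= snd z <= y2 -> exists l, cdif q z l) ->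
  RI q x1 x2 y1 y2 = 0%C.
Proof.
  intros Hq Hx Hy Hd.
  set (r0 := mkR x1 x2 y1 y2).
  change (RI q x1 x2 y1 y2) with (RIr q r0).
  destruct (limit_point q r0 Hq Hx Hy) as [X [Y HXY]].
  destruct (Hd (X, Y)) as [l Hl].
  { destruct (HXY 0%nat) as [A B]. simpl in A, B. simpl. lra. }
  { destruct (HXY 0%nat) as [A B]. simpl in A, B. simpl. lra. }
  apply cdif_approx in Hl.
  destruct (Req_dec (Cmod (RIr q r0)) 0) as [E|NE]. { now apply Cmod_eq_0. }
  exfalso. set (eta := Cmod (RIr q r0)).
  assert (Heta : 0 < eta) by (pose proof (Cmod_ge_0 (RIr q r0)); unfold eta in *; lra).
  set (S := (x2 - x1) + (y2 - y1)). assert (HS : 0 <= S) by (unfold S; lra).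
  set (eps := eta / (4 * S ^ 2 + 1)).
  assert (Heps : 0 < eps) by (unfold eps; apply Rdiv_lt_0_compat; nra).
  destruct (Hl eps Heps) as [dl [Hdl Hl']].
  destruct (Pow_x_infinity 2 ltac:(rewrite Rabs_right; lra) ((S + 1) / dl)) as [n Hn].
  specialize (Hn n (le_n n)). rewrite Rabs_right in Hn by (apply Rle_ge, pow_le; lra).
  assert (P2 : 0 < 2 ^ n) by (apply pow_lt; lra).
  set (D := S / 2 ^ n).
  assert (HD0 : 0 <= D) by (unfold D; apply Rdiv_le_0_compat; lra).
  assert (HDd : D < dl).
  { unfold D. apply Rmult_lt_reg_r with (2 ^ n); auto. unfold Rdiv. rewrite Rmult_assoc, Rinv_l by lra.
    apply Rlt_le_trans with (S + 1). lra.
    apply Rmult_le_reg_r with (/ dl). apply Rinv_0_lt_compat; lra.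
    replace (dl * 2 ^ n * / dl) with (2 ^ n) by (field; lra). lra. }
  destruct (seqr_props q r0 Hq Hx Hy n) as [WA [WB WC]]. simpl in WA, WB.
  destruct (seqr_ordered q r0 Hq Hx Hy n) as [O1 O2].
  set (rn := seqr q r0 n) in *.
  set (L := fun w => (q (X, Y) + l * (w - (X, Y)))%C).
  assert (HL : gcont L) by apply gcont_affine.
  assert (E1 : RIr q rn = RIr (fun w => q w - L w)%C rn).
  { unfold RIr. rewrite RI_minus by auto.
    rewrite (RI_deriv (fun w => q (X, Y) * w + l / 2 * ((w - (X, Y)) * (w - (X, Y))))%C L) by
      (auto; intro z; apply cdif_affine_prim). ring. }
  assert (B : Cmod (RIr q rn) <= 2 * D * (eps * D)).
  { rewrite E1. unfold RIr.
    replace (2 * D) with (2 * ((rx2 rn - rx1 rn) + (ry2 rn - ry1 rn))).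
    2: { rewrite WA, WB. unfold D, S. field. lra. }
    apply RI_bound; auto. apply gcont_minus; auto.
    intros w Hw1 Hw2. destruct (HXY n) as [A1 A2]. fold rn in A1, A2.
    assert (Hwz : Cmod (w - (X, Y)) <= D).
    { eapply Rle_trans. apply Cmod_le_sum. simpl.
      unfold D. replace (S / 2 ^ n) with ((rx2 rn - rx1 rn) + (ry2 rn - ry1 rn)).
      2: { rewrite WA, WB. unfold S. field. lra. }
      assert (Rabs (fst w + - X) <= rx2 rn - rx1 rn) by (apply Rabs_le; lra).
      assert (Rabs (snd w + - Y) <= ry2 rn - ry1 rn) by (apply Rabs_le; lra). lra. }
    unfold L. replace (q w - (q (X, Y) + l * (w - (X, Y))))%C with (q w - q (X, Y) - l * (w - (X, Y)))%C by ring.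
    eapply Rle_trans. apply Hl'. lra.
    apply Rmult_le_compat_l; lra. }
  assert (Hc : eta <= 2 * eps * S ^ 2).
  { apply Rle_trans with (4 ^ n * Cmod (RIr q rn)); auto.
    assert (0 < 4 ^ n) by (apply pow_lt; lra).
    apply Rle_trans with (4 ^ n * (2 * D * (eps * D))). apply Rmult_le_compat_l; lra.
    right. rewrite pow4. unfold D. field. lra. }
  unfold eps in Hc.
  assert (Hc2 : eta * (4 * S ^ 2 + 1) <= 2 * eta * S ^ 2).
  { apply Rmult_le_reg_r with (/ (4 * S ^ 2 + 1)). apply Rinv_0_lt_compat; nra.
    replace (eta * (4 * S ^ 2 + 1) * / (4 * S ^ 2 + 1)) with eta by (field; nra).
    replace (2 * eta * S ^ 2 * / (4 * S ^ 2 + 1)) with (2 * (eta / (4 * S ^ 2 + 1)) * S ^ 2) by (field; nra).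
    exact Hc. }
  nra.
Qed.

Lemma CInt_point g a : CInt g a a = 0%C.
Proof. apply CInt_unique. apply CisI_point. Qed.

Lemma RI_degx q x y1 y2 : RI q x x y1 y2 = 0%C.
Proof. unfold RI, hI. rewrite !CInt_point. ring. Qed.

Lemma RI_degy q x1 x2 y : RI q x1 x2 y y = 0%C.
Proof. unfold RI, vI. rewrite !CInt_point. ring. Qed.

Lemma RI_piece q p u1 u2 v1 v2 : gcont q -> (forall z, z <> p -> exists l, cdif q z l) ->
  u1 <= u2 -> v1 <= v2 ->
  (u1 = u2 \/ v1 = v2 \/ ~ (u1 <= fst p <= u2 /\ v1 <= snd p <= v2)) -> RI q u1 u2 v1 v2 = 0%C.
Proof.
  intros Hq Hd Hu Hv [E|[E|E]].
  - subst. apply RI_degx.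
  - subst. apply RI_degy.
  - apply goursat; auto. intros z Hz1 Hz2. apply Hd. intro X. subst. apply E. auto.
Qed.

Theorem goursat_exc q p x1 x2 y1 y2 : gcont q -> x1 <= x2 -> y1 <= y2 ->
  (forall z, z <> p -> exists l, cdif q z l) -> RI q x1 x2 y1 y2 = 0%C.
Proof.
  intros Hq Hx Hy Hd.
  destruct (classic (x1 <= fst p <= x2 /\ y1 <= snd p <= y2)) as [Hin|Hout].
  2: { apply RI_piece with p; auto. }
  destruct p as [px py]. simpl in Hin.
  destruct (Req_dec (Cmod (RI q x1 x2 y1 y2)) 0) as [E|NE]. { now apply Cmod_eq_0. }
  exfalso. set (eta := Cmod (RI q x1 x2 y1 y2)).
  assert (Heta : 0 < eta) by (pose proof (Cmod_ge_0 (RI q x1 x2 y1 y2)); unfold eta in *; lra).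
  destruct (Hq (px, py) 1) as [d0 [Hd0 H0]]; [lra|].
  set (B := Cmod (q (px, py)) + 1).
  assert (HB : 0 < B) by (unfold B; pose proof (Cmod_ge_0 (q (px, py))); lra).
  set (e := Rmin (d0 / 8) (eta / (16 * B))).
  assert (He : 0 < e) by (unfold e; apply Rmin_pos; apply Rdiv_lt_0_compat; lra).
  assert (He1 : e <= d0 / 8) by apply Rmin_l.
  assert (He2 : e <= eta / (16 * B)) by apply Rmin_r.
  set (a := Rmax x1 (px - e)). set (b := Rmin x2 (px + e)).
  set (c := Rmax y1 (py - e)). set (d := Rmin y2 (py + e)).
  assert (Ha1 : x1 <= a) by apply Rmax_l. assert (Ha2 : px - e <= a) by apply Rmax_r.
  assert (Ha3 : a <= px) by (apply Rmax_lub; lra).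
  assert (Hb1 : b <= x2) by apply Rmin_l. assert (Hb2 : b <= px + e) by apply Rmin_r.
  assert (Hb3 : px <= b) by (apply Rmin_glb; lra).
  assert (Hc1 : y1 <= c) by apply Rmax_l. assert (Hc2 : py - e <= c) by apply Rmax_r.
  assert (Hc3 : c <= py) by (apply Rmax_lub; lra).
  assert (Hd1 : d <= y2) by apply Rmin_l. assert (Hd2 : d <= py + e) by apply Rmin_r.
  assert (Hd3 : py <= d) by (apply Rmin_glb; lra).
  assert (Eq : RI q x1 x2 y1 y2 = RI q a b c d).
  { rewrite (RI_splitx q x1 a x2) by auto. rewrite (RI_splitx q a b x2) by auto.
    rewrite (RI_splity q a b y1 c y2) by auto. rewrite (RI_splity q a b c d y2) by auto.
    assert (Z1 : RI q x1 a y1 y2 = 0%C).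
    { apply RI_piece with (px, py); auto; try lra.
      destruct (Req_dec x1 a) as [E|E]; [left; auto|]. right; right. simpl.
      assert (a = px - e). { unfold a in *. unfold Rmax in *. destruct (Rle_dec x1 (px - e)); lra. }
      lra. }
    assert (Z2 : RI q b x2 y1 y2 = 0%C).
    { apply RI_piece with (px, py); auto; try lra.
      destruct (Req_dec b x2) as [E|E]; [left; auto|]. right; right. simpl.
      assert (b = px + e). { unfold b in *. unfold Rmin in *. destruct (Rle_dec x2 (px + e)); lra. }
      lra. }
    assert (Z3 : RI q a b y1 c = 0%C).
    { apply RI_piece with (px, py); auto; try lra.
      destruct (Req_dec y1 c) as [E|E]; [right; left; auto|]. right; right. simpl.
      assert (c = py - e). { unfold c in *. unfold Rmax in *. destruct (Rle_dec y1 (py - e)); lra. }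
      lra. }
    assert (Z4 : RI q a b d y2 = 0%C).
    { apply RI_piece with (px, py); auto; try lra.
      destruct (Req_dec d y2) as [E|E]; [right; left; auto|]. right; right. simpl.
      assert (d = py + e). { unfold d in *. unfold Rmin in *. destruct (Rle_dec y2 (py + e)); lra. }
      lra. }
    rewrite Z1, Z2, Z3, Z4. ring. }
  assert (Bd : Cmod (RI q a b c d) <= 2 * ((b - a) + (d - c)) * B).
  { apply RI_bound; auto; try lra. intros z Hz1 Hz2.
    assert (Cmod (z - (px, py)) < d0).
    { eapply Rle_lt_trans. apply Cmod_le_sum. simpl.
      assert (Rabs (fst z + - px) <= 2 * e) by (apply Rabs_le; lra).
      assert (Rabs (snd z + - py) <= 2 * e) by (apply Rabs_le; lra). lra. }
    specialize (H0 z H).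
    replace (q z) with (q (px, py) + (q z - q (px, py)))%C by ring.
    pose proof (Cmod_triangle (q (px, py)) (q z - q (px, py))). unfold B. lra. }
  rewrite <- Eq in Bd. fold eta in Bd.
  assert (eta <= 8 * e * B) by nra.
  assert (8 * e * B <= eta / 2).
  { apply Rle_trans with (8 * (eta / (16 * B)) * B). apply Rmult_le_compat_r; lra.
    right. field. lra. }
  lra.
Qed.

Lemma CInt_swap g a b : CexI g a b -> CInt g b a = (- CInt g a b)%C.
Proof. intros H. apply CInt_unique. apply CisI_swap. apply CInt_correct. auto. Qed.

Lemma CInt_const (c : C) a b : CInt (fun _ => c) a b = (RtoC (b - a) * c)%C.
Proof. apply CInt_unique. apply CisI_const. Qed.

Lemma CexI_swap g a b : CexI g a b -> CexI g b a.
Proof. intros [I HI]. exists (- I)%C. apply CisI_swap. exact HI. Qed.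

Lemma CInt_bound_any g a b M : CexI g a b -> (forall t, Rmin a b <= t <= Rmax a b -> Cmod (g t) <= M) ->
  Cmod (CInt g a b) <= Rabs (b - a) * M.
Proof.
  intros He Hb. destruct (Rle_dec a b) as [Hab|Hab].
  - rewrite Rabs_right by lra. apply CInt_bound; auto. intros t Ht. apply Hb.
    rewrite Rmin_left, Rmax_right by lra. auto.
  - rewrite (CInt_swap g b a) by (apply CexI_swap; auto). rewrite Cmod_opp. rewrite Rabs_left by lra.
    replace (- (b - a)) with (a - b) by ring. apply CInt_bound; try lra.
    + apply CexI_swap; auto.
    + intros t Ht. apply Hb. rewrite Rmin_right, Rmax_left by lra. auto.
Qed.

Definition allRI0 (q : C -> C) : Prop :=
  forall x1 x2 y1 y2, x1 <= x2 -> y1 <= y2 -> RI q x1 x2 y1 y2 = 0%C.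

Lemma RI_swapx q x1 x2 y1 y2 : gcont q -> RI q x2 x1 y1 y2 = (- RI q x1 x2 y1 y2)%C.
Proof.
  intros Hq. unfold RI, hI. rewrite (CInt_swap (fun t => q (t, y1))) by (apply hI_ex; auto).
  rewrite (CInt_swap (fun t => q (t, y2))) by (apply hI_ex; auto). ring.
Qed.

Lemma RI_swapy q x1 x2 y1 y2 : gcont q -> RI q x1 x2 y2 y1 = (- RI q x1 x2 y1 y2)%C.
Proof.
  intros Hq. unfold RI, vI. rewrite (CInt_swap (fun t => q (x1, t))) by (apply vI_ex; auto).
  rewrite (CInt_swap (fun t => q (x2, t))) by (apply vI_ex; auto). ring.
Qed.

Lemma allRI0_any q : gcont q -> allRI0 q -> forall x1 x2 y1 y2, RI q x1 x2 y1 y2 = 0%C.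
Proof.
  intros Hq H x1 x2 y1 y2.
  destruct (Rle_dec x1 x2); destruct (Rle_dec y1 y2).
  - apply H; lra.
  - rewrite <- (Copp_involutive (RI q x1 x2 y1 y2)) || idtac.
    replace (RI q x1 x2 y1 y2) with (- RI q x1 x2 y2 y1)%C by (rewrite RI_swapy; auto; ring).
    rewrite H by lra. ring.
  - replace (RI q x1 x2 y1 y2) with (- RI q x2 x1 y1 y2)%C by (rewrite RI_swapx; auto; ring).
    rewrite H by lra. ring.
  - replace (RI q x1 x2 y1 y2) with (- RI q x2 x1 y1 y2)%C by (rewrite RI_swapx; auto; ring).
    replace (RI q x2 x1 y1 y2) with (- RI q x2 x1 y2 y1)%C by (rewrite RI_swapy; auto; ring).
    rewrite H by lra. ring.
Qed.

Definition prim (q : C -> C) (z : C) : C := (hI q 0 0 (fst z) + Ci * vI q (fst z) 0 (snd z))%C.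

Lemma prim_diff q z w : gcont q -> allRI0 q ->
  (prim q w - prim q z = hI q (snd z) (fst z) (fst w) + Ci * vI q (fst w) (snd z) (snd w))%C.
Proof.
  intros Hq H. destruct z as [x0 y0], w as [x1 y1]. unfold prim; simpl.
  assert (R0 := allRI0_any q Hq H x0 x1 0 y0). unfold RI in R0.
  assert (E1 : hI q 0 0 x1 = (hI q 0 0 x0 + hI q 0 x0 x1)%C).
  { unfold hI. apply CInt_Chasles; apply hI_ex; auto. }
  assert (E2 : vI q x1 0 y1 = (vI q x1 0 y0 + vI q x1 y0 y1)%C).
  { unfold vI. apply CInt_Chasles; apply vI_ex; auto. }
  rewrite E1, E2.
  apply (f_equal (fun u => u + hI q y0 x0 x1 + Ci * vI q x1 y0 y1)%C) in R0.
  rewrite <- R0 || idtac. 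
  replace (hI q 0 0 x0 + hI q 0 x0 x1 + Ci * (vI q x1 0 y0 + vI q x1 y0 y1) - (hI q 0 0 x0 + Ci * vI q x0 0 y0))%C
    with (hI q 0 x0 x1 + Ci * vI q x1 0 y0 - hI q y0 x0 x1 - Ci * vI q x0 0 y0 + hI q y0 x0 x1 + Ci * vI q x1 y0 y1)%C by ring.
  rewrite R0. ring.
Qed.

Lemma prim_cdif q z : gcont q -> allRI0 q -> cdif (prim q) z (q z).
Proof.
  intros Hq H. apply dif_cdif. intros e He.
  destruct (Hq z (e / 2)) as [d [Hd Hd']]; [lra|].
  exists (d / 2). split; [lra|]. intros w Hw.
  rewrite prim_diff by auto. destruct z as [x0 y0], w as [x1 y1]. simpl.
  assert (Hdx : Rabs (x1 - x0) <= Cmod ((x1, y1) - (x0, y0))%C).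
  { pose proof (Cmod_fst ((x1, y1) - (x0, y0))%C). simpl in H0. unfold Rminus. lra. }
  assert (Hdy : Rabs (y1 - y0) <= Cmod ((x1, y1) - (x0, y0))%C).
  { pose proof (Cmod_snd ((x1, y1) - (x0, y0))%C). simpl in H0. unfold Rminus. lra. }
  assert (Ew : ((x1, y1) - (x0, y0))%C = (RtoC (x1 - x0) + Ci * RtoC (y1 - y0))%C).
  { unfold RtoC, Ci, Cminus, Cplus, Copp, Cmult; simpl. f_equal; ring. }
  rewrite Ew at 1.
  replace (hI q y0 x0 x1 + Ci * vI q x1 y0 y1 - q (x0, y0) * (RtoC (x1 - x0) + Ci * RtoC (y1 - y0)))%C
    with ((hI q y0 x0 x1 - RtoC (x1 - x0) * q (x0, y0)) + Ci * (vI q x1 y0 y1 - RtoC (y1 - y0) * q (x0, y0)))%C by ring.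
  unfold hI, vI. rewrite <- (CInt_const (q (x0, y0)) x0 x1). rewrite <- (CInt_const (q (x0, y0)) y0 y1).
  rewrite <- (CInt_minus (fun t => q (t, y0)) (fun _ => q (x0, y0))) by first [apply CexI_cont; intros; apply rcont_const | apply hI_ex; exact Hq].
  rewrite <- (CInt_minus (fun t => q (x1, t)) (fun _ => q (x0, y0))) by first [apply CexI_cont; intros; apply rcont_const | apply vI_ex; exact Hq].
  eapply Rle_trans. apply Cmod_triangle. rewrite Cmod_mult, Cmod_Ci, Rmult_1_l.
  assert (B1 : Cmod (CInt (fun t => q (t, y0) - q (x0, y0))%C x0 x1) <= Rabs (x1 - x0) * (e / 2)).
  { apply CInt_bound_any.
    - apply CexI_cont. intros. apply rcont_plus. apply hline_rcont; auto.
      apply rcont_const.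
    - intros t Ht. left. apply Hd'. eapply Rle_lt_trans. apply Cmod_le_sum. simpl.
      replace (y0 + - y0) with 0 by ring. rewrite Rabs_R0.
      assert (Rabs (t + - x0) <= Rabs (x1 - x0)).
      { unfold Rmin, Rmax in Ht. destruct (Rle_dec x0 x1); apply Rabs_le; split;
        [ | | | ]; unfold Rabs; destruct (Rcase_abs (x1 - x0)); lra. }
      lra. }
  assert (B2 : Cmod (CInt (fun t => q (x1, t) - q (x0, y0))%C y0 y1) <= Rabs (y1 - y0) * (e / 2)).
  { apply CInt_bound_any.
    - apply CexI_cont. intros. apply rcont_plus. apply vline_rcont; auto.
      apply rcont_const.
    - intros t Ht. left. apply Hd'. eapply Rle_lt_trans. apply Cmod_le_sum. simpl.
      assert (Rabs (t + - y0) <= Rabs (y1 - y0)).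
      { unfold Rmin, Rmax in Ht. destruct (Rle_dec y0 y1); apply Rabs_le; split;
        [ | | | ]; unfold Rabs; destruct (Rcase_abs (y1 - y0)); lra. }
      assert (Rabs (x1 + - x0) <= Cmod ((x1, y1) - (x0, y0))%C) by (unfold Rminus in Hdx; exact Hdx).
      lra. }
  assert (Rabs (x1 - x0) * (e / 2) <= Cmod ((x1, y1) - (x0, y0))%C * (e / 2)) by (apply Rmult_le_compat_r; lra).
  assert (Rabs (y1 - y0) * (e / 2) <= Cmod ((x1, y1) - (x0, y0))%C * (e / 2)) by (apply Rmult_le_compat_r; lra).
  lra.
Qed.

Definition dcirc (r t : R) : C := (Ci * RtoC r * (cos t, sin t))%C.
Definition CI (q : C -> C) (p : C) (r : R) : C :=
  CInt (fun t => q (circ p r t) * dcirc r t)%C 0 (2 * PI).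

Lemma rcont_ext f g t : (forall u, f u = g u) -> rcont f t -> rcont g t.
Proof. intros E H e He. destruct (H e He) as [d [Hd H']]. exists d. split; auto.
  intros u Hu. rewrite <- !E. auto. Qed.

Lemma rcont_circ p r t : rcont (circ p r) t.
Proof. eapply rcdif_rcont. apply rcdif_circ. Qed.

Lemma rcont_dcirc r t : rcont (dcirc r) t.
Proof.
  apply rcont_ext with (fun u => Ci * RtoC r * circ 0 1 u)%C.
  { intro u. unfold dcirc, circ. unfold RtoC, Ci, Cplus, Cmult; simpl. f_equal; ring. }
  apply rcont_mult. apply rcont_const. apply rcont_circ.
Qed.

Lemma circ_period p r : circ p r (2 * PI) = circ p r 0.
Proof. unfold circ. rewrite cos_2PI, sin_2PI, cos_0, sin_0. reflexivity. Qed.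

Lemma CI_FTC (P q : C -> C) p r :
  (forall t, cdif P (circ p r t) (q (circ p r t))) -> (forall t, ccont q (circ p r t)) ->
  CI q p r = 0%C.
Proof.
  intros HP Hq. unfold CI. apply CInt_unique.
  assert (E : (P (circ p r (2 * PI)) - P (circ p r 0))%C = 0%C) by (rewrite circ_period; ring).
  rewrite <- E.
  apply (CisI_FTC (fun t => P (circ p r t))).
  - intros t _. apply rcdif_rdif. apply chain_rc. apply HP. apply rcdif_circ.
  - intros t _. apply rcont_mult. apply rcont_comp. apply Hq. apply rcont_circ. apply rcont_dcirc.
Qed.

Lemma CI_cauchy q p r s : gcont q -> (forall z, z <> s -> exists l, cdif q z l) -> CI q p r = 0%C.
Proof.
  intros Hq Hd. apply CI_FTC with (prim q).
  - intros t. apply prim_cdif; auto. intros x1 x2 y1 y2 H1 H2. apply goursat_exc with s; auto.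
  - intros t. apply Hq.
Qed.

Lemma CexI_CI q p r : (forall t, ccont q (circ p r t)) ->
  CexI (fun t => q (circ p r t) * dcirc r t)%C 0 (2 * PI).
Proof.
  intros H. apply CexI_cont. intros t _. apply rcont_mult. apply rcont_comp. apply H. apply rcont_circ.
  apply rcont_dcirc.
Qed.

Lemma CI_plus q h p r : (forall t, ccont q (circ p r t)) -> (forall t, ccont h (circ p r t)) ->
  CI (fun z => q z + h z)%C p r = (CI q p r + CI h p r)%C.
Proof.
  intros H1 H2. unfold CI. apply CInt_unique.
  apply CisI_ext with (fun t => q (circ p r t) * dcirc r t + h (circ p r t) * dcirc r t)%C.
  { intros; ring. }
  apply CisI_plus; apply CInt_correct; apply CexI_CI; auto.
Qed.

Lemma CI_scal q p r (c : C) : (forall t, ccont q (circ p r t)) ->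
  CI (fun z => c * q z)%C p r = (c * CI q p r)%C.
Proof.
  intros H1. unfold CI. apply CInt_unique.
  apply CisI_ext with (fun t => c * (q (circ p r t) * dcirc r t))%C.
  { intros; ring. }
  apply CisI_scal; apply CInt_correct; apply CexI_CI; auto.
Qed.

Lemma CI_ext q h p r : (forall t, q (circ p r t) = h (circ p r t)) -> CI q p r = CI h p r.
Proof.
  intros E. unfold CI, CInt. apply (@RInt_ext C_R_CompleteNormedModule). intros t _. rewrite E. reflexivity.
Qed.

Lemma CI_bound q p r M : 0 <= r -> (forall t, 0 <= t <= 2 * PI -> Cmod (q (circ p r t)) <= M) -> (forall t, ccont q (circ p r t)) ->
  Cmod (CI q p r) <= 2 * PI * (r * M).
Proof.
  intros Hr HM Hc. unfold CI.
  replace (2 * PI * (r * M)) with ((2 * PI - 0) * (r * M)) by ring.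
  apply CInt_bound. pose proof PI_RGT_0; lra. apply CexI_CI; auto.
  intros t Ht. rewrite Cmod_mult. unfold dcirc. rewrite !Cmod_mult, Cmod_Ci, Cmod_R.
  assert (Cmod (cos t, sin t) = 1).
  { unfold Cmod; simpl. replace (cos t * (cos t * 1) + sin t * (sin t * 1)) with 1.
    apply sqrt_1. pose proof (sin2_cos2 t). unfold Rsqr in H. lra. }
  rewrite H, Rabs_right by lra. pose proof (HM t Ht). pose proof (Cmod_ge_0 (q (circ p r t))). nra.
Qed.

Lemma ccont_pow f z n : ccont f z -> ccont (fun w => (f w) ^ n)%C z.
Proof.
  intros H. induction n as [|n IH].
  - simpl. apply ccont_const.
  - simpl. apply ccont_mult; auto.
Qed.

Lemma cdif_powS p w m : cdif (fun z => (z - p) ^ (S m))%C w (RtoC (INR (S m)) * (w - p) ^ m)%C.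
Proof.
  induction m as [|m IH].
  - eapply cdif_eq. simpl.
    apply (cdif_mult (fun z => z - p)%C (fun _ => 1%C)).
    apply (cdif_plus (fun z => z) (fun _ => - p)%C). apply cdif_id. apply cdif_const. apply cdif_const.
    simpl. ring.
  - eapply cdif_eq.
    apply (cdif_mult (fun z => z - p)%C (fun z => (z - p) ^ (S m))%C).
    apply (cdif_plus (fun z => z) (fun _ => - p)%C). apply cdif_id. apply cdif_const. exact IH.
    rewrite !S_INR. change ((w - p) ^ S m)%C with ((w - p) * (w - p) ^ m)%C.
    rewrite !RtoC_plus. ring.
Qed.

Lemma Cmod_circ_sub p r t : 0 <= r -> Cmod (circ p r t - p) = r.
Proof.
  intros Hr. unfold circ. replace (p + RtoC r * (cos t, sin t) - p)%C with (RtoC r * (cos t, sin t))%C by ring.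
  rewrite Cmod_mult, Cmod_R, Rabs_right by lra.
  assert (Cmod (cos t, sin t) = 1).
  { unfold Cmod; simpl. replace (cos t * (cos t * 1) + sin t * (sin t * 1)) with 1.
    apply sqrt_1. pose proof (sin2_cos2 t). unfold Rsqr in H. lra. }
  rewrite H. ring.
Qed.

Lemma circ_neq p r t z : 0 < r -> Cmod (z - p) < r -> circ p r t <> z.
Proof.
  intros Hr Hz E. pose proof (Cmod_circ_sub p r t ltac:(lra)). rewrite E in H. lra.
Qed.

Lemma circ_neq_p p r t : 0 < r -> circ p r t <> p.
Proof.
  intros Hr E. pose proof (Cmod_circ_sub p r t ltac:(lra)). rewrite E in H.
  replace (p - p)%C with (RtoC 0) in H by ring. rewrite Cmod_0 in H. lra.
Qed.

Lemma CI_kterm p r (c : C) k : 0 < r ->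
  CI (fun z => c ^ (S k) * / (z - p) ^ (S (S k)))%C p r = 0%C.
Proof.
  intros Hr.
  apply CI_FTC with (fun z => - c ^ (S k) / RtoC (INR (S k)) * / (z - p) ^ (S k))%C.
  - intros t. set (w := circ p r t).
    assert (Hw : (w - p)%C <> 0%C) by (apply Cminus_eq0; apply circ_neq_p; auto).
    assert (Hk : RtoC (INR (S k)) <> 0%C) by (intro X; apply RtoC_inj in X; pose proof (pos_INR k); rewrite S_INR in X; lra).
    assert (HA : ((w - p) ^ k)%C <> 0%C) by (apply Cpow_nz; auto).
    eapply cdif_eq.
    apply (cdif_mult (fun _ => - c ^ S k / RtoC (INR (S k)))%C (fun z => / (z - p) ^ S k)%C).
    apply cdif_const. apply cdif_inv. apply cdif_powS. apply Cpow_nz; auto.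
    cbv beta.
    change ((w - p) ^ S k)%C with ((w - p) * (w - p) ^ k)%C.
    change ((w - p) ^ S (S k))%C with ((w - p) * ((w - p) * (w - p) ^ k))%C.
    set (Ck := (c ^ S k)%C). set (A := ((w - p) ^ k)%C). set (K := RtoC (INR (S k))) in *.
    field. repeat split; auto.
  - intros t. apply ccont_mult. apply ccont_const. apply ccont_inv.
    apply ccont_pow. apply (ccont_plus (fun z => z) (fun _ => - p)%C). apply ccont_id. apply ccont_const.
    apply Cpow_nz. apply Cminus_eq0. apply circ_neq_p; auto.
Qed.

Lemma CI_inv_center p r : 0 < r -> CI (fun z => / (z - p))%C p r = (RtoC (2 * PI) * Ci)%C.
Proof.
  intros Hr. unfold CI.
  rewrite (RInt_ext (V := C_R_CompleteNormedModule) _ (fun _ => Ci)).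
  - change (CInt (fun _ => Ci) 0 (2 * PI) = (RtoC (2 * PI) * Ci)%C). rewrite CInt_const. f_equal. f_equal. ring.
  - intros t _. assert (Hw : (circ p r t - p)%C <> 0%C) by (apply Cminus_eq0; apply circ_neq_p; auto).
    unfold dcirc. replace (Ci * RtoC r * (cos t, sin t))%C with (Ci * (circ p r t - p))%C.
    change ((/ (circ p r t - p) * (Ci * (circ p r t - p)))%C = Ci :> C). field. auto. unfold circ. ring.
Qed.

Fixpoint csum (F : nat -> C) (N : nat) : C :=
  match N with O => 0%C | S n => (csum F n + F n)%C end.

Lemma pow_div_aux (c u : C) N : u <> 0%C -> (c ^ N * / u ^ (S N) = (c * / u) ^ N * / u)%C.
Proof.
  intros Hu. rewrite Cpow_mult_l, Cpow_inv by auto.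
  change (u ^ S N)%C with (u * u ^ N)%C. assert ((u ^ N)%C <> 0%C) by (apply Cpow_nz; auto).
  field. split; auto.
Qed.

Lemma geom_id (c u : C) N : u <> 0%C -> (u - c)%C <> 0%C ->
  (/ (u - c) = csum (fun k => c ^ k * / u ^ (S k)) N + (c * / u) ^ N * / (u - c))%C.
Proof.
  intros Hu Huc. induction N as [|N IH].
  - simpl. ring.
  - assert (E : ((c * / u) ^ N * / (u - c) = c ^ N * / u ^ (S N) + (c * / u) ^ (S N) * / (u - c))%C).
    { rewrite pow_div_aux by auto.
      change ((c * / u) ^ S N)%C with ((c * / u) * (c * / u) ^ N)%C.
      set (X := ((c * / u) ^ N)%C). field. split; auto. }
    rewrite IH at 1. rewrite E.
    change (csum (fun k => c ^ k * / u ^ (S k)) (S N))%C with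
      (csum (fun k => c ^ k * / u ^ (S k)) N + c ^ N * / u ^ (S N))%C. ring.
Qed.

Lemma ccont_ext f g z0 d : 0 < d -> (forall w, Cmod (w - z0) < d -> f w = g w) -> ccont f z0 -> ccont g z0.
Proof.
  intros Hd E H e He. destruct (H e He) as [d1 [Hd1 H1]]. exists (Rmin d d1). split; [apply Rmin_pos; lra|].
  intros w Hw. pose proof (Rmin_l d d1). pose proof (Rmin_r d d1).
  rewrite <- (E w) by lra. rewrite <- (E z0). apply H1; lra.
  replace (z0 - z0)%C with (RtoC 0) by ring. rewrite Cmod_0. lra.
Qed.

Lemma ccont_subc z p : ccont (fun w => w - p)%C z.
Proof. apply (ccont_plus (fun w => w) (fun _ => - p)%C). apply ccont_id. apply ccont_const. Qed.

Lemma ccont_csum (F : nat -> C -> C) z N : (forall k, ccont (F k) z) -> ccont (fun w => csum (fun k => F k w) N) z.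
Proof.
  intros H. induction N as [|N IH].
  - simpl. apply ccont_const.
  - simpl. apply ccont_plus; auto.
Qed.

Lemma ccont_on_circ_inv p r z : 0 < r -> Cmod (z - p) < r -> forall t, ccont (fun w => / (w - z))%C (circ p r t).
Proof.
  intros Hr Hz t. apply ccont_inv. apply ccont_subc. apply Cminus_eq0. apply circ_neq; auto.
Qed.

Lemma ccont_on_circ_invp p r k : 0 < r -> forall t, ccont (fun w => / (w - p) ^ k)%C (circ p r t).
Proof.
  intros Hr t. apply ccont_inv. apply ccont_pow. apply ccont_subc. apply Cpow_nz. apply Cminus_eq0. apply circ_neq_p; auto.
Qed.

Lemma CI_csum p r (c : C) N : 0 < r ->
  CI (fun w => csum (fun k => c ^ k * / (w - p) ^ (S k)) (S N))%C p r = (RtoC (2 * PI) * Ci)%C.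
Proof.
  intros Hr. induction N as [|N IH].
  - rewrite <- (CI_inv_center p r Hr). apply CI_ext. intros t. simpl.
    assert (Hw : (circ p r t - p)%C <> 0%C) by (apply Cminus_eq0; apply circ_neq_p; auto).
    field. auto.
  - rewrite (CI_ext _ (fun w => csum (fun k => c ^ k * / (w - p) ^ (S k)) (S N) + c ^ (S N) * / (w - p) ^ (S (S N)))%C).
    2: { intros t. reflexivity. }
    rewrite CI_plus. rewrite IH. rewrite CI_kterm by auto. ring.
    + intros t. apply (ccont_csum (fun k w => c ^ k * / (w - p) ^ (S k))%C).
      intros k. apply ccont_mult. apply ccont_const. apply ccont_on_circ_invp; auto.
    + intros t. apply ccont_mult. apply ccont_const. apply ccont_on_circ_invp; auto.
Qed.

Lemma Cmod_lower (a b : C) : Cmod a - Cmod b <= Cmod (a - b).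
Proof. pose proof (Cmod_triangle (a - b) b). replace (a - b + b)%C with a in H by ring. lra. Qed.

Lemma le_eps_0 (x : R) : 0 <= x -> (forall e, 0 < e -> x <= e) -> x = 0.
Proof. intros H1 H2. destruct (Req_dec x 0); auto. specialize (H2 (x / 2)). lra. Qed.

Theorem winding p r z : 0 < r -> Cmod (z - p) < r -> CI (fun w => / (w - z))%C p r = (RtoC (2 * PI) * Ci)%C.
Proof.
  intros Hr Hz. set (c := (z - p)%C). set (rho := Cmod c / r).
  assert (Hc0 : 0 <= Cmod c) by apply Cmod_ge_0.
  assert (Hrho0 : 0 <= rho) by (unfold rho; apply Rdiv_le_0_compat; lra).
  assert (Hrho1 : rho < 1).
  { unfold rho. apply Rmult_lt_reg_r with r; [lra|]. unfold Rdiv. rewrite Rmult_assoc, Rinv_l by lra. fold c in Hz. lra. }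
  set (K := 2 * PI * (r * / (r - Cmod c))).
  assert (HK : 0 < K) by (unfold K; pose proof PI_RGT_0; apply Rmult_lt_0_compat; [lra|];
    apply Rmult_lt_0_compat; [lra| apply Rinv_0_lt_compat; unfold c; lra]).
  assert (Bnd : forall N, Cmod (CI (fun w => / (w - z))%C p r - RtoC (2 * PI) * Ci) <= K * rho ^ (S N)).
  { intros N.
    rewrite (CI_ext _ (fun w => csum (fun k => c ^ k * / (w - p) ^ (S k)) (S N) + (c * / (w - p)) ^ (S N) * / (w - z))%C).
    2: { intros t. assert (Hu : (circ p r t - p)%C <> 0%C) by (apply Cminus_eq0; apply circ_neq_p; auto).
         assert (Huc : (circ p r t - p - c)%C <> 0%C).
         { replace (circ p r t - p - c)%C with (circ p r t - z)%C by (unfold c; ring). apply Cminus_eq0. apply circ_neq; auto. }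
         replace (circ p r t - z)%C with (circ p r t - p - c)%C by (unfold c; ring).
         apply geom_id; auto. }
    rewrite CI_plus. rewrite CI_csum by auto.
    2: { intros t. apply (ccont_csum (fun k w => c ^ k * / (w - p) ^ (S k))%C).
         intros k. apply ccont_mult. apply ccont_const. apply ccont_on_circ_invp; auto. }
    2: { intros t. apply ccont_mult. apply ccont_pow. apply ccont_mult. apply ccont_const.
         apply ccont_inv. apply ccont_subc. apply Cminus_eq0. apply circ_neq_p; auto.
         apply ccont_on_circ_inv; auto. }
    replace (RtoC (2 * PI) * Ci + CI (fun w => (c * / (w - p)) ^ S N * / (w - z))%C p r - RtoC (2 * PI) * Ci)%C
      with (CI (fun w => (c * / (w - p)) ^ S N * / (w - z))%C p r) by ring.
    unfold K. rewrite Rmult_assoc.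
    replace (r * / (r - Cmod c) * rho ^ S N) with (r * (rho ^ S N * / (r - Cmod c))) by ring.
    apply CI_bound. lra.
    - intros t _. assert (Hu : (circ p r t - p)%C <> 0%C) by (apply Cminus_eq0; apply circ_neq_p; auto).
      rewrite Cmod_mult, Cmod_pow, Cmod_mult, Cmod_inv, Cmod_circ_sub by (auto; lra).
      rewrite Cmod_inv by (apply Cminus_eq0; apply circ_neq; auto).
      apply Rmult_le_compat. apply pow_le. apply Rmult_le_pos; auto. left; apply Rinv_0_lt_compat; lra.
      left; apply Rinv_0_lt_compat. apply Cmod_gt_0. apply Cminus_eq0; apply circ_neq; auto.
      right. reflexivity.
      apply Rinv_le_contravar. unfold c; lra.
      pose proof (Cmod_lower (circ p r t - p) c). rewrite Cmod_circ_sub in H by lra.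
      replace (circ p r t - p - c)%C with (circ p r t - z)%C in H by (unfold c; ring). lra.
    - intros t. apply ccont_mult. apply ccont_pow. apply ccont_mult. apply ccont_const.
      apply ccont_inv. apply ccont_subc. apply Cminus_eq0. apply circ_neq_p; auto.
      apply ccont_on_circ_inv; auto. }
  apply Ceq_minus. apply Cmod_eq_0. apply le_eps_0. apply Cmod_ge_0.
  intros e He. destruct (pow_lt_1_zero rho ltac:(rewrite Rabs_right; lra) (e / K)) as [N HN].
  apply Rdiv_lt_0_compat; lra.
  specialize (HN (S N) ltac:(lia)). rewrite Rabs_right in HN by (apply Rle_ge, pow_le; lra).
  eapply Rle_trans. apply (Bnd N).
  apply Rle_trans with (K * (e / K)). apply Rmult_le_compat_l; lra. right; field; lra.
Qed.

Definition holo (f : C -> C) : Prop := forall w, exists l, cdif f w l.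

Lemma holo_gcont f : holo f -> gcont f.
Proof. intros H z. destruct (H z) as [l Hl]. eapply cdif_ccont; eauto. Qed.

Lemma Cmod_diff_le (a b : C) : Rabs (Cmod a - Cmod b) <= Cmod (a - b).
Proof.
  apply Rabs_le. split.
  - pose proof (Cmod_lower b a). rewrite Cmod_sub_sym in H. lra.
  - apply Cmod_lower.
Qed.

Lemma circ_bounded f p r : gcont f -> exists M, forall t, 0 <= t <= 2 * PI -> Cmod (f (circ p r t)) <= M.
Proof.
  intros Hf.
  destruct (continuity_ab_maj (fun t => Cmod (f (circ p r t))) 0 (2 * PI)) as [Mx [HM _]].
  - pose proof PI_RGT_0; lra.
  - intros c _. unfold continuity_pt, continue_in, limit1_in, limit_in. simpl. unfold R_dist.
    intros e He. destruct (rcont_comp f (circ p r) c (Hf _) (rcont_circ p r c) e He) as [d [Hd H]].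
    exists d. split; [lra|]. intros x [_ Hx]. eapply Rle_lt_trans. apply Cmod_diff_le. apply H. exact Hx.
  - exists (Cmod (f (circ p r Mx))). exact HM.
Qed.

Theorem CIF f p r z : holo f -> 0 < r -> Cmod (z - p) < r ->
  CI (fun w => f w * / (w - z))%C p r = (RtoC (2 * PI) * Ci * f z)%C.
Proof.
  intros Hf Hr Hz.
  destruct (Hf z) as [l Hl]. pose proof Hl as Hl'. destruct Hl' as [phi [d [Hd [Hc [Hphi Heq]]]]].
  set (g := fun w => if Ceq_dec w z then l else ((f w - f z) * / (w - z))%C).
  set (h := fun w => ((f w - f z) * / (w - z))%C).
  assert (Hh : forall w0, w0 <> z -> exists l1, cdif h w0 l1).
  { intros w0 Hw0. unfold h. destruct (Hf w0) as [l0 Hl0]. eexists.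
    eapply cdif_eq. apply (cdif_mult (fun w => f w - f z)%C (fun w => / (w - z))%C).
    - apply (cdif_plus f (fun _ => - f z)%C). exact Hl0. apply cdif_const.
    - apply (cdif_inv (fun w => w - z)%C). apply (cdif_plus (fun w => w) (fun _ => - z)%C).
      apply cdif_id. apply cdif_const. apply Cminus_eq0; auto.
    - reflexivity. }
  assert (Gh : forall w0, w0 <> z -> forall w, Cmod (w - w0) < Cmod (w0 - z) -> h w = g w).
  { intros w0 Hw0 w Hw. unfold g, h. destruct (Ceq_dec w z) as [E|E]; auto.
    subst. rewrite Cmod_sub_sym in Hw. lra. }
  assert (Pw : forall w0, w0 <> z -> 0 < Cmod (w0 - z)).
  { intros. apply Cmod_gt_0. apply Cminus_eq0; auto. }
  assert (Gc : gcont g).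
  { intro w0. destruct (Ceq_dec w0 z) as [E|E].
    - subst w0. apply ccont_ext with phi d; [exact Hd | | exact Hc].
      intros w Hw. unfold g. destruct (Ceq_dec w z) as [E|E]. subst; auto.
      rewrite Heq by auto. field. apply Cminus_eq0; auto.
    - apply ccont_ext with h (Cmod (w0 - z)). apply Pw; exact E. apply Gh; exact E.
      destruct (Hh w0 E) as [l1 Hl1]. eapply cdif_ccont. exact Hl1. }
  assert (Gd : forall w0, w0 <> z -> exists l0, cdif g w0 l0).
  { intros w0 Hw0. destruct (Hh w0 Hw0) as [l1 Hl1]. exists l1. apply cdif_ext with h (Cmod (w0 - z)). apply Pw; exact Hw0. apply Gh; exact Hw0. exact Hl1. }
  assert (CG : CI g p r = 0%C) by (apply CI_cauchy with z; auto).
  rewrite (CI_ext _ (fun w => g w + f z * / (w - z))%C).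
  2: { intros t. assert (Hn := circ_neq p r t z Hr Hz). unfold g. destruct (Ceq_dec (circ p r t) z); [congruence|].
       field. apply Cminus_eq0; auto. }
  rewrite CI_plus; [| intros t; apply Gc | intros t; apply ccont_mult; [apply ccont_const | apply ccont_on_circ_inv; auto]].
  rewrite CI_scal; [| intros t; apply ccont_on_circ_inv; auto].
  rewrite CG, winding by auto. ring.
Qed.

Lemma ccont_fdiv f h z : ccont f z -> ccont h z -> h z <> 0%C -> ccont (fun w => f w * / h w)%C z.
Proof. intros H1 H2 H3. apply ccont_mult; auto. apply ccont_inv; auto. Qed.

Lemma twopiCi_nz : (RtoC (2 * PI) * Ci)%C <> 0%C.
Proof.
  apply Cmult_neq_0. intro X. apply RtoC_inj in X. pose proof PI_RGT_0. lra. apply Ci_nz.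
Qed.

Ltac cc := repeat first [apply ccont_subc | apply ccont_const | apply ccont_mult | apply ccont_plus].

Section Div.
Variable f : C -> C.
Variable p : C.
Hypothesis Hf : holo f.
Hypothesis Hp : f p = 0%C.

Let K0 := (/ (RtoC (2 * PI) * Ci))%C.
Let Fz (z : C) := fun w => (f w * / ((w - z) * (w - p)))%C.
Let Phi (z : C) := (K0 * CI (Fz z) p 1)%C.
Let F3 := fun w => (f w * / ((w - p) * (w - p) * (w - p)))%C.
Let D := (K0 * CI F3 p 1)%C.
Let G (z : C) := fun w => (f w * / ((w - z) * ((w - p) * (w - p) * (w - p))))%C.

Let Hfc : gcont f := holo_gcont f Hf.

Lemma cn (z : C) t : Cmod (z - p) < 1 -> (circ p 1 t - z)%C <> 0%C.
Proof. intros H. apply Cminus_eq0. apply circ_neq; auto; lra. Qed.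
Lemma cnp t : (circ p 1 t - p)%C <> 0%C.
Proof. apply Cminus_eq0. apply circ_neq_p; lra. Qed.

Lemma Phi_eq z : z <> p -> Cmod (z - p) < 1 -> Phi z = (f z * / (z - p))%C.
Proof.
  intros Hz1 Hz2. unfold Phi.
  assert (Hzp : (z - p)%C <> 0%C) by (apply Cminus_eq0; auto).
  rewrite (CI_ext (Fz z) (fun w => / (z - p) * (f w * / (w - z) + (- 1) * (f w * / (w - p))))%C).
  2: { intros t. unfold Fz. pose proof (cn z t Hz2). pose proof (cnp t). field. repeat split; auto. }
  rewrite CI_scal.
  2: { intros t. apply ccont_plus. apply ccont_fdiv; auto. apply ccont_subc. apply cn; auto.
       apply ccont_mult. apply ccont_const. apply ccont_fdiv; auto. apply ccont_subc. apply cnp. }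
  rewrite CI_plus.
  2: { intros t. apply ccont_fdiv; auto. apply ccont_subc. apply cn; auto. }
  2: { intros t. apply ccont_mult. apply ccont_const. apply ccont_fdiv; auto. apply ccont_subc. apply cnp. }
  rewrite CI_scal.
  2: { intros t. apply ccont_fdiv; auto. apply ccont_subc. apply cnp. }
  rewrite !CIF by (auto; try lra; replace (p - p)%C with (RtoC 0) by ring; rewrite Cmod_0; lra).
  rewrite Hp. unfold K0. pose proof twopiCi_nz. field. split; auto. split. apply Ci_nz. intro X. apply RtoC_inj in X. pose proof PI_RGT_0. lra.
Qed.

Lemma Phi_exp z : Cmod (z - p) < 1 / 2 ->
  (Phi z - Phi p - D * (z - p) = K0 * ((z - p) * (z - p)) * CI (G z) p 1)%C.
Proof.
  intros Hz. assert (Hz' : Cmod (z - p) < 1) by lra.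
  unfold Phi, D.
  assert (Cz : forall t, ccont (Fz z) (circ p 1 t)).
  { intros t. apply ccont_fdiv; auto. cc. repeat first [apply Cmult_neq_0 | apply cnp | apply cn; auto]. }
  assert (Cp : forall t, ccont (Fz p) (circ p 1 t)).
  { intros t. apply ccont_fdiv; auto. cc. repeat first [apply Cmult_neq_0 | apply cnp | apply cn; auto]. }
  assert (C3 : forall t, ccont F3 (circ p 1 t)).
  { intros t. apply ccont_fdiv; auto. cc. repeat first [apply Cmult_neq_0 | apply cnp | apply cn; auto]. }
  assert (CG : forall t, ccont (G z) (circ p 1 t)).
  { intros t. apply ccont_fdiv; auto. cc. repeat first [apply Cmult_neq_0 | apply cnp | apply cn; auto]. }
  assert (E : (CI (Fz z) p 1 - CI (Fz p) p 1 - (z - p) * CI F3 p 1 = (z - p) * (z - p) * CI (G z) p 1)%C).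
  { rewrite <- (CI_scal F3 p 1 (z - p)) by auto.
    rewrite <- (CI_scal (G z) p 1 ((z - p) * (z - p))) by auto.
    replace (CI (Fz z) p 1 - CI (Fz p) p 1 - CI (fun w => (z - p) * F3 w)%C p 1)%C with
      (CI (Fz z) p 1 + ((-1) * CI (Fz p) p 1 + (-1) * CI (fun w => (z - p) * F3 w)%C p 1))%C by ring.
    assert (C3' : forall t, ccont (fun w => (z - p) * F3 w)%C (circ p 1 t)).
    { intros t. apply ccont_mult. apply ccont_const. auto. }
    rewrite <- (CI_scal (Fz p)) by auto.
    rewrite <- (CI_scal (fun w => (z - p) * F3 w)%C) by auto.
    rewrite <- CI_plus.
    2: { intros t. apply ccont_mult. apply ccont_const. auto. }
    2: { intros t. apply ccont_mult. apply ccont_const. auto. }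
    rewrite <- CI_plus; auto.
    2: { intros t. apply ccont_plus; apply ccont_mult; try apply ccont_const; auto. }
    apply CI_ext. intros t. unfold Fz, F3, G. pose proof (cn z t Hz'). pose proof (cnp t).
    field. repeat split; auto. }
  replace (K0 * CI (Fz z) p 1 - K0 * CI (Fz p) p 1 - K0 * CI F3 p 1 * (z - p))%C with
    (K0 * (CI (Fz z) p 1 - CI (Fz p) p 1 - (z - p) * CI F3 p 1))%C by ring.
  rewrite E. ring.
Qed.

Lemma Phi_dif : dif Phi p D.
Proof.
  destruct (circ_bounded f p 1 Hfc) as [M HM].
  assert (HM0 : 0 <= M) by (eapply Rle_trans; [apply Cmod_ge_0 | apply (HM 0)]; pose proof PI_RGT_0; lra).
  set (Kb := Cmod K0 * (2 * PI * (1 * (2 * M))) + 1).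
  assert (HKb : 0 < Kb).
  { unfold Kb. pose proof (Cmod_ge_0 K0). pose proof PI_RGT_0.
    assert (0 <= Cmod K0 * (2 * PI * (1 * (2 * M)))) by (apply Rmult_le_pos; [lra|]; nra). lra. }
  intros e He. exists (Rmin (1 / 2) (e / Kb)). split.
  { apply Rmin_pos; [lra| apply Rdiv_lt_0_compat; lra]. }
  intros z Hz. pose proof (Rmin_l (1/2) (e / Kb)). pose proof (Rmin_r (1/2) (e / Kb)).
  rewrite Phi_exp by lra.
  assert (HCI : Cmod (CI (G z) p 1) <= 2 * PI * (1 * (2 * M))).
  { apply CI_bound. lra.
    - intros t Ht. unfold G. rewrite Cmod_mult, Cmod_inv.
      2: { apply Cmult_neq_0. apply cn; lra. repeat apply Cmult_neq_0; apply cnp. }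
      rewrite !Cmod_mult, !Cmod_circ_sub by lra.
      assert (Hd : 1 / 2 <= Cmod (circ p 1 t - z)).
      { pose proof (Cmod_lower (circ p 1 t - p) (z - p)). rewrite Cmod_circ_sub in H1 by lra.
        replace (circ p 1 t - p - (z - p))%C with (circ p 1 t - z)%C in H1 by ring. lra. }
      replace (Cmod (circ p 1 t - z) * (1 * 1 * 1)) with (Cmod (circ p 1 t - z)) by ring.
      apply Rle_trans with (M * / (1 / 2)).
      + apply Rmult_le_compat. apply Cmod_ge_0. left; apply Rinv_0_lt_compat; lra.
        apply HM; auto. apply Rinv_le_contravar; lra.
      + right. field.
    - intros t. apply ccont_fdiv; auto. cc. repeat first [apply Cmult_neq_0 | apply cnp | apply cn; lra]. }
  rewrite !Cmod_mult.
  assert (A : Cmod K0 * (Cmod (z - p) * Cmod (z - p)) * Cmod (CI (G z) p 1) <= Cmod (z - p) * (Cmod (z - p) * Kb)).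
  { apply Rle_trans with (Cmod (z - p) * Cmod (z - p) * (Cmod K0 * (2 * PI * (1 * (2 * M))))).
    - pose proof (Cmod_ge_0 K0). pose proof (Cmod_ge_0 (z - p)).
      replace (Cmod K0 * (Cmod (z - p) * Cmod (z - p)) * Cmod (CI (G z) p 1)) with
        (Cmod (z - p) * Cmod (z - p) * (Cmod K0 * Cmod (CI (G z) p 1))) by ring.
      apply Rmult_le_compat_l. nra. apply Rmult_le_compat_l; lra.
    - unfold Kb. pose proof (Cmod_ge_0 (z - p)). nra. }
  eapply Rle_trans. apply A. rewrite (Rmult_comm e). apply Rmult_le_compat_l. apply Cmod_ge_0.
  apply Rle_trans with (e / Kb * Kb). apply Rmult_le_compat_r; lra. right. field. lra.
Qed.

Theorem div_holo : exists g, holo g /\ forall w, f w = ((w - p) * g w)%C.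
Proof.
  set (g := fun w => if Ceq_dec w p then Phi p else (f w * / (w - p))%C).
  exists g. split.
  - intros w0. destruct (Ceq_dec w0 p) as [E|E].
    + subst w0. exists D. apply cdif_ext with Phi (1 / 2). lra.
      * intros w Hw. unfold g. destruct (Ceq_dec w p) as [E|E]. subst; auto.
        apply Phi_eq; auto. lra.
      * apply dif_cdif. apply Phi_dif.
    + destruct (Hf w0) as [l0 Hl0]. eexists.
      apply cdif_ext with (fun w => f w * / (w - p))%C (Cmod (w0 - p)).
      * apply Cmod_gt_0. apply Cminus_eq0; auto.
      * intros w Hw. unfold g. destruct (Ceq_dec w p) as [E2|E2]; auto. subst. rewrite Cmod_sub_sym in Hw. lra.
      * apply cdif_mult. exact Hl0. apply (cdif_inv (fun w => w - p)%C).
        apply (cdif_plus (fun w => w) (fun _ => - p)%C). apply cdif_id. apply cdif_const.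
        apply Cminus_eq0; auto.
  - intros w. unfold g. destruct (Ceq_dec w p) as [E|E].
    + subst. rewrite Hp. ring.
    + field. apply Cminus_eq0; auto.
Qed.

End Div.

Fixpoint prodm (zs : list C) (w : C) : R :=
  match zs with nil => 1 | z :: r => Cmod (z - w) * prodm r w end.

Lemma prodm_nonneg zs w : 0 <= prodm zs w.
Proof. induction zs; simpl. lra. apply Rmult_le_pos; auto. apply Cmod_ge_0. Qed.

Lemma mean_bound f w R M : holo f -> 0 < R ->
  (forall t, 0 <= t <= 2 * PI -> Cmod (f (circ w R t)) <= M) -> Cmod (f w) <= M.
Proof.
  intros Hf HR HM.
  assert (E := CIF f w R w Hf HR ltac:(replace (w - w)%C with (RtoC 0) by ring; rewrite Cmod_0; lra)).
  assert (B : Cmod (CI (fun z => f z * / (z - w))%C w R) <= 2 * PI * (R * (M / R))).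
  { apply CI_bound. lra.
    - intros t Ht. assert (Hn : (circ w R t - w)%C <> 0%C) by (apply Cminus_eq0; apply circ_neq_p; lra).
      rewrite Cmod_mult, Cmod_inv, Cmod_circ_sub by (auto; lra).
      unfold Rdiv. apply Rmult_le_compat_r. left; apply Rinv_0_lt_compat; lra. auto.
    - intros t. apply ccont_mult. apply holo_gcont; auto. apply ccont_inv. apply ccont_subc.
      apply Cminus_eq0; apply circ_neq_p; lra. }
  rewrite E in B. rewrite !Cmod_mult, Cmod_Ci, Cmod_R, Rabs_right in B by (pose proof PI_RGT_0; lra).
  replace (R * (M / R)) with M in B by (field; lra).
  pose proof PI_RGT_0. nra.
Qed.

Lemma conj_id (a u : C) (R : R) : Cmod u = R ->
  Cmod (RtoC (R * R) - Cconj a * u)%C = R * Cmod (u - a).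
Proof.
  intros Hu.
  assert (E : RtoC (R * R) = (u * Cconj u)%C).
  { replace (R * R) with (Cmod u ^ 2) by (rewrite Hu; ring). apply Cmod2_conj. }
  rewrite E. replace (u * Cconj u - Cconj a * u)%C with (u * Cconj (u - a))%C.
  - rewrite Cmod_mult, Cmod_conj, Hu. reflexivity.
  - rewrite Cminus_conj. ring.
Qed.

Lemma Cmult_integral (a b : C) : (a * b)%C = 0%C -> a = 0%C \/ b = 0%C.
Proof.
  intros H. destruct (Ceq_dec a 0) as [E|E]; [left; auto|right].
  replace b with (/ a * (a * b))%C by (field; auto). rewrite H. ring.
Qed.

Lemma holo_mult_poly g (c a w : C) : holo g -> holo (fun z => g z * (c - a * (z - w)))%C.
Proof.
  intros Hg z. destruct (Hg z) as [l Hl]. eexists.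
  apply cdif_mult. exact Hl.
  apply (cdif_plus (fun _ => c) (fun z => - (a * (z - w)))%C). apply cdif_const.
  apply (cdif_ext (fun z => (-1) * (a * (z - w)))%C _ _ _ 1). lra. intros; ring.
  apply (cdif_mult (fun _ => (-1)%C) (fun z => a * (z - w))%C). apply cdif_const.
  apply (cdif_mult (fun _ => a) (fun z => z - w)%C). apply cdif_const.
  apply (cdif_plus (fun z => z) (fun _ => - w)%C). apply cdif_id. apply cdif_const.
Qed.

Theorem jensen (zs : list C) : forall f w R M, holo f -> 0 < R -> NoDup zs ->
  (forall z, In z zs -> f z = 0%C) ->
  (forall t, 0 <= t <= 2 * PI -> Cmod (f (circ w R t)) <= M) ->
  Cmod (f w) * R ^ (length zs) <= M * prodm zs w.
Proof.
  induction zs as [|z1 zs IH]; intros f w R M Hf HR Hnd Hz HM.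
  - simpl. rewrite Rmult_1_r, Rmult_1_r. apply mean_bound with R; auto.
  - inversion Hnd as [|? ? Hn1 Hnd2]. subst.
    destruct (div_holo f z1 Hf (Hz z1 (or_introl eq_refl))) as [g [Hg Hfg]].
    set (a := (z1 - w)%C).
    set (h := fun z => (g z * (RtoC (R * R) - Cconj a * (z - w)))%C).
    assert (Hh : holo h) by (apply holo_mult_poly; auto).
    assert (Hh0 : forall z, In z zs -> h z = 0%C).
    { intros z Hin. unfold h. assert (z <> z1) by (intro E; subst; auto).
      assert (g z = 0%C).
      { pose proof (Hfg z). rewrite (Hz z (or_intror Hin)) in H0.
        symmetry in H0. apply Cmult_integral in H0. destruct H0 as [E|E]; auto.
        exfalso. apply H. apply Ceq_minus. auto. }
      rewrite H0. ring. }
    assert (HhM : forall t, 0 <= t <= 2 * PI -> Cmod (h (circ w R t)) <= R * M).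
    { intros t Ht. unfold h. rewrite Cmod_mult.
      rewrite (conj_id a (circ w R t - w) R) by (apply Cmod_circ_sub; lra).
      replace (circ w R t - w - a)%C with (circ w R t - z1)%C by (unfold a; ring).
      specialize (HM t Ht). rewrite Hfg, Cmod_mult in HM.
      pose proof (Cmod_ge_0 (g (circ w R t))). pose proof (Cmod_ge_0 (circ w R t - z1)). nra. }
    specialize (IH h w R (R * M) Hh HR Hnd2 Hh0 HhM).
    assert (Ehw : Cmod (h w) = Cmod (g w) * (R * R)).
    { unfold h. replace (w - w)%C with (RtoC 0) by ring. rewrite Cmult_0_r.
      replace (RtoC (R * R) - 0)%C with (RtoC (R * R)) by ring. rewrite Cmod_mult, Cmod_R.
      rewrite Rabs_right; nra. }
    rewrite Ehw in IH. simpl length. simpl prodm. rewrite (Hfg w), Cmod_mult.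
    fold a. replace (w - z1)%C with (- a)%C by (unfold a; ring). rewrite Cmod_opp.
    change (R ^ S (length zs)) with (R * R ^ length zs).
    assert (Hp : 0 <= R ^ length zs) by (apply pow_le; lra).
    assert (Hg0 : 0 <= Cmod (g w)) by apply Cmod_ge_0.
    assert (Ha0 : 0 <= Cmod a) by apply Cmod_ge_0.
    assert (X : Cmod (g w) * R * R ^ length zs <= M * prodm zs w).
    { apply Rmult_le_reg_l with R; auto.
      replace (R * (Cmod (g w) * R * R ^ length zs)) with (Cmod (g w) * (R * R) * R ^ length zs) by ring.
      rewrite IH || idtac. lra. }
    replace (Cmod a * Cmod (g w) * (R * R ^ length zs)) with (Cmod a * (Cmod (g w) * R * R ^ length zs)) by ring.
    replace (M * (Cmod a * prodm zs w)) with (Cmod a * (M * prodm zs w)) by ring.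
    apply Rmult_le_compat_l; auto.
Qed.

Lemma nat_unbounded X : exists n : nat, X < INR n.
Proof.
  destruct (archimed X) as [H1 _]. exists (Z.to_nat (up X)).
  destruct (Z_lt_le_dec (up X) 0) as [L|L].
  - apply IZR_lt in L. pose proof (pos_INR (Z.to_nat (up X))). lra.
  - rewrite INR_IZR_INZ, Z2Nat.id; auto.
Qed.

Lemma exp_le x y : x <= y -> exp x <= exp y.
Proof. intros H. destruct (Rle_lt_or_eq_dec x y H). left; apply exp_increasing; auto. subst; lra. Qed.

Lemma Rpower_pos x y : 0 < Rpower x y.
Proof. unfold Rpower. apply exp_pos. Qed.

Lemma Rpower_lt_base x y c : 0 < x -> x < y -> 0 < c -> Rpower x c < Rpower y c.
Proof.
  intros Hx Hxy Hc. unfold Rpower. apply exp_increasing. apply Rmult_lt_compat_l; auto.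
  apply ln_increasing; auto.
Qed.

Lemma Rpower_inv_pow x r : 0 < x -> 0 < r -> Rpower (Rpower x (1 / r)) r = x.
Proof.
  intros Hx Hr. rewrite Rpower_mult. replace (1 / r * r) with 1 by (field; lra). apply Rpower_1; auto.
Qed.

Lemma Rpower_pow_inv x r : 0 < x -> 0 < r -> Rpower (Rpower x r) (1 / r) = x.
Proof.
  intros Hx Hr. rewrite Rpower_mult. replace (r * (1 / r)) with 1 by (field; lra). apply Rpower_1; auto.
Qed.

Lemma abspow_nonneg x r : 0 <= abspow x r.
Proof. unfold abspow. destruct (Rle_lt_dec (Rabs x) 0). lra. left; apply Rpower_pos. Qed.

Lemma abspow_le y B r : Rabs y <= B -> 0 < B -> 0 <= r -> abspow y r <= Rpower B r.
Proof.
  intros H HB Hr. unfold abspow. destruct (Rle_lt_dec (Rabs y) 0).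
  - left; apply Rpower_pos.
  - apply Rle_Rpower_l; auto.
Qed.

Lemma C_decomp (z : C) : (RtoC (fst z) + Ci * RtoC (snd z))%C = z.
Proof. destruct z as [x y]. unfold RtoC, Ci, Cplus, Cmult; simpl. f_equal; ring. Qed.

Lemma entire_holo f : entire f -> holo f.
Proof.
  intros H z. destruct (entire_dif f H z) as [l Hl]. exists l. apply dif_cdif; auto.
Qed.

Lemma prodm_le zs w B : 0 <= B -> (forall z, In z zs -> Cmod (z - w) <= B) -> prodm zs w <= B ^ length zs.
Proof.
  intros HB. induction zs as [|z zs IH]; intros H; simpl. lra.
  apply Rmult_le_compat. apply Cmod_ge_0. apply prodm_nonneg. apply H; left; auto.
  apply IH. intros; apply H; right; auto.
Qed.

Lemma liminf_freq (u : nat -> R) (c : R) : Rbar_lt (LimInf_seq u) c ->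
  exists c1, c1 < c /\ forall N, exists k, (N <= k)%nat /\ u k < c1.
Proof.
  intros H. assert (HL := proj2_sig (ex_LimInf_seq u)). fold (LimInf_seq u) in HL.
  destruct (LimInf_seq u) as [L| |] eqn:E; simpl in H.
  - exists ((L + c) / 2). split. lra. intros N.
    assert (He : 0 < (c - L) / 2) by lra.
    destruct (HL (mkposreal _ He)) as [A _]. destruct (A N) as [n [Hn1 Hn2]]. exists n. split; auto.
    simpl in Hn2. lra.
  - contradiction.
  - exists (c - 1). split. lra. intros N. destruct (HL (c - 1) N) as [n [Hn1 Hn2]]. exists n. auto.
Qed.

Fixpoint ZL (lam : nat -> R) (k : nat) : list C :=
  match k with
  | O => RtoC (lam 0%nat) :: RtoC (- lam 0%nat) :: nil
  | S j => RtoC (lam (S j)) :: RtoC (- lam (S j)) :: ZL lam j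
  end.

Section Z.
Variable lam : nat -> R.
Hypothesis Hpos : forall k, 0 < lam k.
Hypothesis Hinc : forall k, lam k < lam (S k).

Lemma lam_mono j k : (j <= k)%nat -> lam j <= lam k.
Proof. induction 1. lra. pose proof (Hinc m). lra. Qed.

Lemma ZL_len k : length (ZL lam k) = (2 * k + 2)%nat.
Proof. induction k; simpl; auto. rewrite IHk. lia. Qed.

Lemma ZL_in k z : In z (ZL lam k) -> exists j, (j <= k)%nat /\ (z = RtoC (lam j) \/ z = RtoC (- lam j)).
Proof.
  induction k as [|k IH]; simpl; intros H.
  - destruct H as [H|[H|H]]; [exists 0%nat; auto | exists 0%nat; auto | contradiction].
  - destruct H as [H|[H|H]]; [exists (S k); auto | exists (S k); auto |].
    destruct (IH H) as [j [Hj E]]. exists j. split; auto.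
Qed.

Lemma ZL_mod k z : In z (ZL lam k) -> Cmod z <= lam k.
Proof.
  intros H. destruct (ZL_in k z H) as [j [Hj [E|E]]]; subst; rewrite Cmod_R.
  - rewrite Rabs_right by (pose proof (Hpos j); lra). apply lam_mono; auto.
  - rewrite Rabs_Ropp, Rabs_right by (pose proof (Hpos j); lra). apply lam_mono; auto.
Qed.

Lemma RtoC_neq x y : x <> y -> RtoC x <> RtoC y.
Proof. intros H E. apply RtoC_inj in E. auto. Qed.

Lemma ZL_nodup k : NoDup (ZL lam k).
Proof.
  induction k as [|k IH]; simpl.
  - constructor. simpl. intros [E|E]; [|auto]. apply RtoC_inj in E. pose proof (Hpos 0%nat). lra.
    constructor. simpl; auto. constructor.
  - assert (notin : forall x, Rabs x = lam (S k) -> ~ In (RtoC x) (ZL lam k)).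
    { intros x Hx Hin. apply ZL_mod in Hin. rewrite Cmod_R, Hx in Hin. pose proof (Hinc k). lra. }
    constructor.
    + simpl. intros [E|E].
      * apply RtoC_inj in E. pose proof (Hpos (S k)). lra.
      * apply (notin (lam (S k))); auto. rewrite Rabs_right; auto. pose proof (Hpos (S k)). lra.
    + constructor; auto. apply notin. rewrite Rabs_Ropp, Rabs_right; auto. pose proof (Hpos (S k)). lra.
Qed.

End Z.

Lemma exp_pow_INR x n : exp x ^ n = exp (INR n * x).
Proof.
  rewrite <- Rpower_pow by apply exp_pos. unfold Rpower. rewrite ln_exp. reflexivity.
Qed.

Lemma ln_le x y : 0 < x -> x <= y -> ln x <= ln y.
Proof. intros Hx H. destruct (Rle_lt_or_eq_dec x y H). left; apply ln_increasing; auto. subst; lra. Qed.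

Theorem proposition1 (rho a b : R) (lam : nat -> R)
  (Hrho : 1 < rho) (Ha : 0 < a) (Hb : 0 < b)
  (Hpos : forall k, 0 < lam k)
  (Hinc : forall k, lam k < lam (S k))
  (Hliminf : Rbar_lt (LimInf_seq (fun k => lam k / Rpower (INR k) (1 / rho)))
                     (Rpower (2 / (b * rho * exp 1)) (1 / rho))) :
  uniqueness_set (Gspace a b rho)
    (fun z : C => exists k : nat, z = RtoC (lam k) \/ z = RtoC (- lam k)).
Proof.
  intros f [Hent [K [HK Hbd]]] Hz z0.
  destruct (Ceq_dec (f z0) 0) as [E0|NE]; auto. exfalso.
  assert (Hf := entire_holo f Hent).
  set (q0 := Cmod z0). assert (Hq0 : 0 <= q0) by apply Cmod_ge_0.
  set (F0 := Cmod (f z0)). assert (HF0 : 0 < F0) by (apply Cmod_gt_0; auto).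
  set (E := exp (1 / rho)). assert (HE : 0 < E) by apply exp_pos.
  set (c0 := Rpower (2 / (b * rho * exp 1)) (1 / rho)). assert (Hc0 : 0 < c0) by apply Rpower_pos.
  destruct (liminf_freq _ c0 Hliminf) as [c1' [Hc1' Hfreq]].
  set (c1 := Rmax c1' (c0 / 2)).
  assert (Hc1a : c1' <= c1) by apply Rmax_l. assert (Hc1b : c0 / 2 <= c1) by apply Rmax_r.
  assert (Hc1c : c1 < c0) by (apply Rmax_lub_lt; lra).
  set (c2 := (c1 + c0) / 2). assert (Hc2 : 0 < c2) by (unfold c2; lra).
  set (beta := b * (exp 1 * Rpower c2 rho)).
  assert (Hbeta : beta < 2 / rho).
  { assert (X : Rpower c2 rho < Rpower c0 rho) by (apply Rpower_lt_base; unfold c2; lra).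
    unfold c0 in X. rewrite Rpower_inv_pow in X.
    2: { apply Rdiv_lt_0_compat. lra. apply Rmult_lt_0_compat. nra. apply exp_pos. }
    2: lra.
    unfold beta. pose proof (exp_pos 1).
    apply Rlt_le_trans with (b * (exp 1 * (2 / (b * rho * exp 1)))).
    - apply Rmult_lt_compat_l; auto. apply Rmult_lt_compat_l; auto.
    - right. field. repeat split; lra. }
  set (T := q0 * (1 + E) / (E * (c2 - c1))).
  assert (Hc21 : 0 < c2 - c1) by (unfold c2; lra).
  assert (HT : 0 <= T) by (unfold T; apply Rdiv_le_0_compat; nra).
  set (Cst := ln K - ln F0 - 2 / rho).
  destruct (nat_unbounded (Rmax (Rpower (T + 1) rho) ((Rabs Cst + 1) / (2 / rho - beta)))) as [N HN].
  assert (HN1 : Rpower (T + 1) rho < INR N) by (eapply Rle_lt_trans; [apply Rmax_l | exact HN]).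
  assert (HN2 : (Rabs Cst + 1) / (2 / rho - beta) < INR N) by (eapply Rle_lt_trans; [apply Rmax_r | exact HN]).
  destruct (Hfreq N) as [k [Hk Hku]].
  assert (HkN : INR N <= INR k) by (apply le_INR; auto).
  assert (Hk0 : 0 < INR k) by (pose proof (Rpower_pos (T + 1) rho); lra).
  set (s := Rpower (INR k) (1 / rho)). assert (Hs0 : 0 < s) by apply Rpower_pos.
  assert (Hlam : lam k < c1 * s).
  { cbv beta in Hku. fold s in Hku. assert (lam k / s < c1) by lra. apply Rmult_lt_reg_r with (/ s). apply Rinv_0_lt_compat; auto.
    replace (c1 * s * / s) with c1 by (field; lra). exact H. }
  assert (Hs : T + 1 <= s).
  { rewrite <- (Rpower_pow_inv (T + 1) rho) by lra. apply Rle_Rpower_l.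
    apply Rlt_le, Rdiv_lt_0_compat; lra. split. apply Rpower_pos. lra. }
  set (r := lam k + q0). assert (Hr : 0 < r) by (unfold r; pose proof (Hpos k); lra).
  set (R := E * r). assert (HR : 0 < R) by (unfold R; apply Rmult_lt_0_compat; auto).
  set (P := Rpower (q0 + R) rho).
  set (M := K * exp (b * P)).
  assert (J := jensen (ZL lam k) f z0 R M Hf HR (ZL_nodup lam Hpos Hinc k)).
  assert (Hzero : forall z, In z (ZL lam k) -> f z = 0%C).
  { intros z Hin. destruct (ZL_in lam k z Hin) as [j [_ Hj]]. apply Hz. exists j. exact Hj. }
  assert (Hcirc : forall t, 0 <= t <= 2 * PI -> Cmod (f (circ z0 R t)) <= M).
  { intros t _. rewrite <- (C_decomp (circ z0 R t)). eapply Rle_trans. apply Hbd.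
    unfold M. apply Rmult_le_compat_l. lra. apply exp_le.
    assert (A1 : 0 <= a * abspow (fst (circ z0 R t)) rho) by (apply Rmult_le_pos; [lra | apply abspow_nonneg]).
    assert (A2 : abspow (snd (circ z0 R t)) rho <= P).
    { unfold P. apply abspow_le; [| unfold q0; pose proof (Cmod_ge_0 z0); lra | lra].
      eapply Rle_trans. apply Cmod_snd.
      replace (circ z0 R t) with (z0 + (circ z0 R t - z0))%C by ring.
      eapply Rle_trans. apply Cmod_triangle. rewrite Cmod_circ_sub by lra. unfold q0. lra. }
    assert (A3 : b * abspow (snd (circ z0 R t)) rho <= b * P) by (apply Rmult_le_compat_l; lra).
    lra. }
  specialize (J Hzero Hcirc).
  set (n := length (ZL lam k)) in *.
  assert (Hprod : prodm (ZL lam k) z0 <= r ^ n).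
  { apply prodm_le. lra. intros z Hin. unfold r.
    replace (z - z0)%C with (z + - z0)%C by ring. eapply Rle_trans. apply Cmod_triangle.
    rewrite Cmod_opp. pose proof (ZL_mod lam Hpos Hinc k z Hin). unfold q0. lra. }
  assert (HM : 0 < M) by (unfold M; apply Rmult_lt_0_compat; [lra | apply exp_pos]).
  assert (J2 : F0 * E ^ n <= M).
  { assert (Hrn : 0 < r ^ n) by (apply pow_lt; auto).
    apply Rmult_le_reg_r with (r ^ n); auto.
    unfold R in J. rewrite Rpow_mult_distr in J. fold F0 in J.
    apply Rle_trans with (M * prodm (ZL lam k) z0). lra.
    apply Rmult_le_compat_l; lra. }
  unfold E in J2. rewrite exp_pow_INR in J2.
  assert (J3 : ln F0 + INR n * (1 / rho) <= ln K + b * P).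
  { apply ln_le in J2. 2: { apply Rmult_lt_0_compat; auto. apply exp_pos. }
    unfold M in J2. rewrite !ln_mult, !ln_exp in J2; auto; apply exp_pos. }
  assert (HP : P <= exp 1 * Rpower c2 rho * INR k).
  { unfold P. apply Rle_trans with (Rpower (E * c2 * s) rho).
    - apply Rle_Rpower_l. lra. split. unfold R; nra.
      unfold R, r.
      assert (q0 * (1 + E) <= E * (c2 - c1) * s).
      { apply Rle_trans with (E * (c2 - c1) * T).
        - right. unfold T. field. split; lra.
        - apply Rmult_le_compat_l. apply Rmult_le_pos; lra. lra. }
      assert (E * lam k <= E * (c1 * s)) by (apply Rmult_le_compat_l; lra).
      nra.
    - rewrite <- !Rpower_mult_distr by (try apply Rmult_lt_0_compat; auto).
      unfold s. rewrite Rpower_inv_pow by lra.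
      assert (RE : Rpower E rho = exp 1) by (unfold E, Rpower; rewrite ln_exp; f_equal; field; lra).
      rewrite <- (Rpower_mult_distr E c2 rho) by lra. rewrite RE. lra. }
  assert (Hn : INR n = 2 * INR k + 2).
  { unfold n. rewrite ZL_len. rewrite plus_INR, mult_INR. simpl. ring. }
  rewrite Hn in J3.
  assert (J4 : (2 / rho - beta) * INR k <= Cst).
  { unfold Cst, beta. assert (b * P <= b * (exp 1 * Rpower c2 rho * INR k)) by (apply Rmult_le_compat_l; lra).
    replace ((2 * INR k + 2) * (1 / rho)) with (2 / rho * INR k + 2 / rho) in J3 by (field; lra).
    nra. }
  assert (Hgap : 0 < 2 / rho - beta) by lra.
  assert (J5 : Rabs Cst + 1 < (2 / rho - beta) * INR k).
  { apply Rlt_le_trans with ((2 / rho - beta) * INR N).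
    - apply Rmult_lt_reg_r with (/ (2 / rho - beta)). apply Rinv_0_lt_compat; auto.
      replace ((2 / rho - beta) * INR N * / (2 / rho - beta)) with (INR N) by (rewrite Rmult_comm, <- Rmult_assoc, Rinv_l by lra; ring). exact HN2.
    - apply Rmult_le_compat_l; lra. }
  pose proof (Rle_abs Cst). lra.
Qed.
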